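(* Assume the initial curve is smooth with $A(0)>0$, and let $\vec f$ be a classical solution of (AP), (LP) or (JP) on $[0,T)$ with $T$ the maximal existence time. Then for $t\in(0,T)$: (1) for (AP): $\frac{dA}{dt}=0$, $A\equiv A(0)>0$, $\frac{dL^2}{dt}\le0$, $\frac{dI_{-1}}{dt}\le0$; (2) for (LP): $\frac{dA}{dt}\ge0$, $A\ge A(0)>0$, $\frac{dL^2}{dt}=0$, $\frac{dI_{-1}}{dt}\le0$; (3) for (JP): $A>0$ and $\frac{dI_{-1}}{dt}\le0$; (4) in all three cases $1-n\le I_{-1}(t)\le I_{-1}(0)$, equivalently $4\pi\le \frac{L(t)^2}{A(t)}\le\frac{L(0)^2}{A(0)}$.
   Context: Fix an integer $n\ge1$. For a closed plane curve $\vec f:\mathbb{R}/L\mathbb{Z}\to\mathbb{R}^2$ parametrized by arc length $s$ ($L>0$ its length): $\vec\nu$ is $\partial_s\vec f$ rotated counterclockwise by $\pi/2$, $\kappa=\partial_s^2\vec f\cdot\vec\nu$, rotation number $n=\frac1{2\pi}\int_0^L\kappa\,ds$, $A=-\frac12\int_0^L\vec f\cdot\vec\nu\,ds$, $\tilde\kappa=\kappa-\frac1L\int_0^L\kappa\,ds$, $I_0=L\int_0^L\tilde\kappa^2\,ds$, $I_{-1}=1-\frac{4n\pi A}{L^2}$. A classical solution on $[0,T)$ is a smooth family $\vec f(\cdot,t)$, $t\in[0,T)$, of closed curves with rotation number $n$, each parametrized by arc length on $\mathbb{R}/L(t)\mathbb{Z}$, satisfying $\partial_t\vec f=(\tilde\kappa-g/L)\vec\nu$,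 where $g$ is one of: (AP) $g\equiv0$; (LP) $g=L\left(\int_0^L\kappa\,ds\right)^{-1}\int_0^L\tilde\kappa^2\,ds=\frac{I_0}{2\pi n}$; (JP) $g=\frac{L^2}{2A}-\int_0^L\kappa\,ds$. All quantities are evaluated at time $t$, e.g. $L(t)$, $A(t)$, $I_{-1}(t)$. *)

(* Defs.v *)
From Stdlib Require Import Reals Lra List Classical ClassicalDescription IndefiniteDescription.
Open Scope R_scope.

(* Total integral: the Riemann integral of f on [a,b] if f is Riemann
   integrable there, 0 otherwise (only used for continuous integrands). *)
Definition integ (f : R -> R) (a b : R) : R :=
  match excluded_middle_informative
          (exists pr : Riemann_integrable f a b, True) with
  | left H => RiemannInt (proj1_sig (constructive_indefinite_description _ H))
  | right _ => 0
  end.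

(* Derivative of a real function at a point (0 if it does not exist). *)
Definition deriv1 (h : R -> R) (x : R) : R :=
  match excluded_middle_informative (exists l, derivable_pt_lim h x l) with
  | left H => proj1_sig (constructive_indefinite_description _ H)
  | right _ => 0
  end.

(* Partial derivatives of F(u,t): u = curve parameter, t = time. *)
Definition pu (F : R -> R -> R) : R -> R -> R :=
  fun u t => deriv1 (fun v => F v t) u.
Definition pt (F : R -> R -> R) : R -> R -> R :=
  fun u t => deriv1 (fun s => F u s) t.

Fixpoint dw (w : list bool) (F : R -> R -> R) : R -> R -> R :=
  match w with
  | nil => F
  | b :: w' => (if b then pu else pt) (dw w' F)
  end.

Definition cont2_rel (P : R -> Prop) (F : R -> R -> R) (u t : R) : Prop :=
  forall eps, 0 < eps -> exists del, 0 < del /\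
    forall u' t', P t' -> Rabs (u' - u) < del -> Rabs (t' - t) < del ->
      Rabs (F u' t' - F u t) < eps.

Definition smooth_on (F : R -> R -> R) (T : R) : Prop :=
  (forall w u t, 0 < t < T ->
     cont2_rel (fun _ => True) (dw w F) u t /\
     (exists l, derivable_pt_lim (fun v => dw w F v t) u l) /\
     (exists l, derivable_pt_lim (fun s => dw w F u s) t l)) /\
  (forall k u t, 0 <= t < T ->
     (exists l, derivable_pt_lim (fun v => dw (repeat true k) F v t) u l) /\
     cont2_rel (fun s => 0 <= s < T) (dw (repeat true k) F) u t).

(* Each curve is parametrized over u in R with period 1 (u in R/Z);
   arc length s satisfies ds = |f_u| du, d/ds = |f_u|^{-1} d/du. *)
Section Geom.
Variables x y : R -> R -> R.

Definition speed (u t : R) : R := sqrt (pu x u t ^ 2 + pu y u t ^ 2).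
Definition ds (G : R -> R -> R) : R -> R -> R := fun u t => pu G u t / speed u t.
Definition nux (u t : R) : R := - ds y u t.
Definition nuy (u t : R) : R := ds x u t.
Definition kappa (u t : R) : R :=
  ds (ds x) u t * nux u t + ds (ds y) u t * nuy u t.
Definition int_s (h : R -> R -> R) (t : R) : R :=
  integ (fun u => h u t * speed u t) 0 1.
Definition Len (t : R) : R := int_s (fun _ _ => 1) t.
Definition Ktot (t : R) : R := int_s kappa t.
Definition Area (t : R) : R :=
  - (1/2) * int_s (fun u t => x u t * nux u t + y u t * nuy u t) t.
Definition ktil (u t : R) : R := kappa u t - Ktot t / Len t.
Definition I0 (t : R) : R := Len t * int_s (fun u t => ktil u t ^ 2) t.
Definition Im1 (n : nat) (t : R) : R :=
  1 - 4 * INR n * PI * Area t / (Len t ^ 2).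
End Geom.

Inductive flow := AP | LP | JP.

Definition gterm (p : flow) (x y : R -> R -> R) (t : R) : R :=
  match p with
  | AP => 0
  | LP => Len x y t * / Ktot x y t * int_s x y (fun u t => ktil x y u t ^ 2) t
  | JP => Len x y t ^ 2 / (2 * Area x y t) - Ktot x y t
  end.

Definition classical_sol (n : nat) (p : flow) (x y : R -> R -> R) (T : R) : Prop :=
  smooth_on x T /\ smooth_on y T /\
  (* closed curves: 1-periodic in the parameter *)
  (forall u t, 0 <= t < T -> x (u + 1) t = x u t /\ y (u + 1) t = y u t) /\
  (forall u t, 0 <= t < T -> 0 < speed x y u t) /\
  (* rotation number n *)
  (forall t, 0 <= t < T -> Ktot x y t = 2 * PI * INR n) /\
  (* g is well defined for (JP) *)
  (p = JP -> forall t, 0 <= t < T -> Area x y t <> 0) /\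
  (forall u t, 0 < t < T ->
     pt x u t = (ktil x y u t - gterm p x y t / Len x y t) * nux x y u t /\
     pt y u t = (ktil x y u t - gterm p x y t / Len x y t) * nuy x y u t).

Definition deriv_sat (h : R -> R) (t : R) (P : R -> Prop) : Prop :=
  exists d, derivable_pt_lim h t d /\ P d.

(* Main.v *)
Require Import Defs.
From Stdlib Require Import Reals.
Open Scope R_scope.
From Stdlib Require Import Lra Psatz ClassicalDescription IndefiniteDescription FunctionalExtensionality.
From Coquelicot Require Import Coquelicot.
Open Scope R_scope.

Lemma dpl_eq f x l l' : derivable_pt_lim f x l -> l = l' -> derivable_pt_lim f x l'.
Proof. intros H ->; exact H. Qed.
Lemma dpl_ext f g x l : (forall v, f v = g v) -> derivable_pt_lim f x l -> derivable_pt_lim g x l.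
Proof. intros E H. apply is_derive_Reals. apply is_derive_Reals in H. eapply is_derive_ext; eauto. Qed.
Lemma dpl_ext_loc f g x l : locally x (fun v => f v = g v) -> derivable_pt_lim f x l -> derivable_pt_lim g x l.
Proof. intros E H. apply is_derive_Reals. apply is_derive_Reals in H. eapply is_derive_ext_loc; eauto. Qed.
Lemma dpl_plus f g x a b : derivable_pt_lim f x a -> derivable_pt_lim g x b ->
  derivable_pt_lim (fun v => f v + g v) x (a + b).
Proof. intros; now apply (derivable_pt_lim_plus f g). Qed.
Lemma dpl_minus f g x a b : derivable_pt_lim f x a -> derivable_pt_lim g x b ->
  derivable_pt_lim (fun v => f v - g v) x (a - b).
Proof. intros; now apply (derivable_pt_lim_minus f g). Qed.
Lemma dpl_mult f g x a b : derivable_pt_lim f x a -> derivable_pt_lim g x b ->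
  derivable_pt_lim (fun v => f v * g v) x (a * g x + f x * b).
Proof. intros. pose proof (derivable_pt_lim_mult f g x a b H H0). eapply dpl_eq; [exact H1|]. ring. Qed.
Lemma dpl_const c x : derivable_pt_lim (fun _ => c) x 0.
Proof. apply derivable_pt_lim_const. Qed.
Lemma dpl_id x : derivable_pt_lim (fun v => v) x 1.
Proof. apply derivable_pt_lim_id. Qed.
Lemma dpl_scal c f x a : derivable_pt_lim f x a -> derivable_pt_lim (fun v => c * f v) x (c * a).
Proof. intros; eapply dpl_eq; [apply (dpl_mult (fun _ => c) f); [apply dpl_const|exact H]|]; ring. Qed.
Lemma dpl_opp f x a : derivable_pt_lim f x a -> derivable_pt_lim (fun v => - f v) x (- a).
Proof. intros; exact (derivable_pt_lim_opp f x a H). Qed.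
Lemma dpl_sq f x a : derivable_pt_lim f x a -> derivable_pt_lim (fun v => f v ^ 2) x (2 * f x * a).
Proof. intros. eapply dpl_eq; [apply (dpl_mult f (fun v => f v ^ 1)); [exact H| eapply dpl_eq; [apply (dpl_mult f (fun _ => 1)); [exact H|apply dpl_const]|reflexivity]]|]. simpl; ring.
Qed.
Lemma dpl_inv f x a : derivable_pt_lim f x a -> f x <> 0 ->
  derivable_pt_lim (fun v => / f v) x (- a / (f x) ^ 2).
Proof. intros. eapply dpl_eq. pose proof (derivable_pt_lim_div (fun _ => 1) f x 0 a (dpl_const 1 x) H H0) as H1.
  eapply dpl_ext; [|exact H1]. intros v; unfold div_fct, Rdiv; ring. unfold Rsqr; field; auto. Qed.
Lemma dpl_div f g x a b : derivable_pt_lim f x a -> derivable_pt_lim g x b -> g x <> 0 ->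
  derivable_pt_lim (fun v => f v / g v) x ((a * g x - f x * b) / (g x) ^ 2).
Proof. intros. eapply dpl_eq. exact (derivable_pt_lim_div f g x a b H H0 H1). unfold Rsqr; field; auto. Qed.
Lemma dpl_comp f g x a b : derivable_pt_lim g x a -> derivable_pt_lim f (g x) b ->
  derivable_pt_lim (fun v => f (g v)) x (b * a).
Proof. intros. eapply dpl_eq. exact (derivable_pt_lim_comp g f x a b H H0). ring. Qed.
Lemma dpl_sqrt f x a : derivable_pt_lim f x a -> 0 < f x ->
  derivable_pt_lim (fun v => sqrt (f v)) x (a / (2 * sqrt (f x))).
Proof. intros. eapply dpl_eq. apply (dpl_comp sqrt f); eauto. apply derivable_pt_lim_sqrt; auto.
  unfold Rdiv; ring. Qed.
Lemma dpl_cont f x a : derivable_pt_lim f x a -> continuity_pt f x.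
Proof. intros H. apply derivable_continuous_pt. exists a; exact H. Qed.

Lemma cp_plus f g x : continuity_pt f x -> continuity_pt g x -> continuity_pt (fun v => f v + g v) x.
Proof. intros; now apply (continuity_pt_plus f g). Qed.
Lemma cp_minus f g x : continuity_pt f x -> continuity_pt g x -> continuity_pt (fun v => f v - g v) x.
Proof. intros; now apply (continuity_pt_minus f g). Qed.
Lemma cp_mult f g x : continuity_pt f x -> continuity_pt g x -> continuity_pt (fun v => f v * g v) x.
Proof. intros; now apply (continuity_pt_mult f g). Qed.
Lemma cp_const c x : continuity_pt (fun _ => c) x.
Proof. apply continuity_pt_const; intros ? ?; reflexivity. Qed.
Lemma cp_id x : continuity_pt (fun v => v) x.
Proof. apply continuity_pt_id. Qed.
Lemma cp_opp f x : continuity_pt f x -> continuity_pt (fun v => - f v) x.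
Proof. intros; now apply (continuity_pt_opp f). Qed.
Lemma cp_inv f x : continuity_pt f x -> f x <> 0 -> continuity_pt (fun v => / f v) x.
Proof. intros; now apply (continuity_pt_inv f). Qed.
Lemma cp_div f g x : continuity_pt f x -> continuity_pt g x -> g x <> 0 -> continuity_pt (fun v => f v / g v) x.
Proof. intros; now apply (continuity_pt_div f g). Qed.
Lemma cp_comp f g x : continuity_pt g x -> continuity_pt f (g x) -> continuity_pt (fun v => f (g v)) x.
Proof. intros; now apply (continuity_pt_comp g f). Qed.
Lemma cp_pow f x k : continuity_pt f x -> continuity_pt (fun v => f v ^ k) x.
Proof. intros. induction k; simpl. apply cp_const. apply cp_mult; auto. Qed.
Lemma cp_sqrt f x : continuity_pt f x -> 0 <= f x -> continuity_pt (fun v => sqrt (f v)) x.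
Proof. intros; apply (cp_comp sqrt f); auto. apply continuity_pt_sqrt; auto. Qed.

Lemma cp2c f x : continuity_pt f x -> continuous f x.
Proof. intros H. apply continuity_pt_filterlim in H. exact H. Qed.

Lemma exR f a b : a <= b -> (forall z, a <= z <= b -> continuity_pt f z) -> ex_RInt f a b.
Proof. intros Hab H. apply (ex_RInt_continuous (V := R_CompleteNormedModule)). intros z Hz.
  rewrite Rmin_left in Hz by lra; rewrite Rmax_right in Hz by lra. apply cp2c; auto. Qed.

Lemma RInt_add f g a b : ex_RInt f a b -> ex_RInt g a b ->
  @eq R (RInt (fun v => f v + g v) a b) (RInt f a b + RInt g a b).
Proof. intros. exact (RInt_plus f g a b H H0). Qed.
Lemma RInt_sub f g a b : ex_RInt f a b -> ex_RInt g a b ->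
  @eq R (RInt (fun v => f v - g v) a b) (RInt f a b - RInt g a b).
Proof. intros. exact (RInt_minus f g a b H H0). Qed.
Lemma RInt_scl c f a b : ex_RInt f a b -> @eq R (RInt (fun v => c * f v) a b) (c * RInt f a b).
Proof. intros. exact (RInt_scal f a b c H). Qed.
Lemma RInt_cst c a b : @eq R (RInt (fun _ => c) a b) (c * (b - a)).
Proof. rewrite RInt_const. unfold scal; simpl; unfold mult; simpl. ring. Qed.

Lemma ftc F f a b : a <= b -> (forall u, a <= u <= b -> derivable_pt_lim F u (f u)) ->
  (forall u, a <= u <= b -> continuity_pt f u) -> @eq R (RInt f a b) (F b - F a).
Proof. intros Hab HF Hf. apply is_RInt_unique. 
  assert (H := is_RInt_derive F f a b). rewrite Rmin_left, Rmax_right in H by lra.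
  apply H. intros; apply is_derive_Reals; auto. intros; apply cp2c; auto. Qed.

Lemma RInt_nonneg f a b : a <= b -> ex_RInt f a b -> (forall x, a < x < b -> 0 <= f x) -> 0 <= RInt f a b.
Proof. apply RInt_ge_0. Qed.
Lemma RInt_mono f g a b : a <= b -> ex_RInt f a b -> ex_RInt g a b ->
  (forall x, a < x < b -> f x <= g x) -> RInt f a b <= RInt g a b.
Proof. apply RInt_le. Qed.
Lemma RInt_chasles f a b c : ex_RInt f a b -> ex_RInt f b c -> @eq R (RInt f a b + RInt f b c) (RInt f a c).
Proof. intros; exact (RInt_Chasles f a b c H H0). Qed.

Lemma dRInt f a u : (forall z, continuity_pt f z) -> derivable_pt_lim (fun v => RInt f a v) u (f u).
Proof. intros Hf. apply is_derive_Reals. apply is_derive_RInt with (a := a).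
  apply filter_forall. intros b0. apply (RInt_correct (V := R_CompleteNormedModule)). apply (ex_RInt_continuous (V := R_CompleteNormedModule)). intros; apply cp2c; auto.
  apply cp2c; auto. Qed.
Lemma RInt_extR (f g : R -> R) a b : a <= b -> (forall x, a < x < b -> f x = g x) -> @eq R (RInt f a b) (RInt g a b).
Proof. intros Hab H. apply RInt_ext. rewrite Rmin_left, Rmax_right by lra. auto. Qed.
Ltac cont := repeat first [ solve [auto] | apply cp_const | apply cp_id | apply cp_plus | apply cp_minus
  | (apply cp_div; [ | | solve [auto]]) | (apply cp_inv; [ | solve [auto]]) | apply cp_mult | apply cp_opp | apply cp_pow ].
Lemma cp_ext f g x : (forall v, f v = g v) -> continuity_pt f x -> continuity_pt g x.
Proof. intros E H eps Heps. destruct (H eps Heps) as [d [Hd H']]. exists d; split; auto.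
  intros v Hv. rewrite <- !E. apply H'; auto. Qed.
Definition Dx f x := exists l, derivable_pt_lim f x l.
Lemma Dx_of f x l : derivable_pt_lim f x l -> Dx f x.
Proof. intros; exists l; auto. Qed.
Lemma Dx_plus f g x : Dx f x -> Dx g x -> Dx (fun v => f v + g v) x.
Proof. intros [a Ha] [b Hb]; eexists; apply dpl_plus; eauto. Qed.
Lemma Dx_minus f g x : Dx f x -> Dx g x -> Dx (fun v => f v - g v) x.
Proof. intros [a Ha] [b Hb]; eexists; apply dpl_minus; eauto. Qed.
Lemma Dx_mult f g x : Dx f x -> Dx g x -> Dx (fun v => f v * g v) x.
Proof. intros [a Ha] [b Hb]; eexists; apply dpl_mult; eauto. Qed.
Lemma Dx_div f g x : Dx f x -> Dx g x -> g x <> 0 -> Dx (fun v => f v / g v) x.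
Proof. intros [a Ha] [b Hb] ?; eexists; apply dpl_div; eauto. Qed.
Lemma Dx_const c x : Dx (fun _ => c) x.
Proof. eexists; apply dpl_const. Qed.
Lemma Dx_pow f x n : Dx f x -> Dx (fun v => f v ^ n) x.
Proof. intros H. induction n; simpl. apply Dx_const. apply Dx_mult; auto. Qed.
Lemma Dx_ext f g x : (forall v, f v = g v) -> Dx f x -> Dx g x.
Proof. intros E [l H]; exists l; eapply dpl_ext; eauto. Qed.

Lemma wirt_k (sg h h1 : R -> R) al be k :
 al < be -> (forall u, continuity_pt sg u) -> (forall u, 0 < sg u) ->
 (forall u, derivable_pt_lim h u (h1 u)) -> (forall u, continuity_pt h1 u) ->
 h al = 0 -> h be = 0 -> 0 < k -> k * RInt sg al be < PI ->
 k^2 * RInt (fun u => sg u * h u ^2) al be <= RInt (fun u => h1 u ^2 / sg u) al be.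
Proof.
  intros Hab Csg Psg Dh Ch1 Ha Hb Hk Hkl.
  set (S := fun u => RInt sg al u).
  assert (dS : forall u, derivable_pt_lim S u (sg u)) by (intros; apply dRInt; auto).
  set (l := RInt sg al be).
  assert (Hkl' : k * l < PI) by exact Hkl.
  assert (Srange : forall u, al <= u <= be -> 0 <= S u <= l).
  { intros u Hu. split.
    - apply RInt_nonneg; [lra| apply exR; [lra|auto] |]. intros; apply Rlt_le; auto.
    - unfold l, S. rewrite <- (RInt_chasles sg al u be) by (apply exR; [lra|auto]).
      assert (0 <= RInt sg u be); [|lra].
      apply RInt_nonneg; [lra| apply exR; [lra|auto] |]. intros; apply Rlt_le; auto. }
  assert (Hl : 0 <= l) by (destruct (Srange be); lra).
  set (ph := fun u => k * S u + (PI - k * l)/2).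
  assert (dph : forall u, derivable_pt_lim ph u (k * sg u)).
  { intros u. eapply dpl_eq. apply dpl_plus. apply dpl_scal. apply dS. apply dpl_const. ring. }
  assert (phr : forall u, al <= u <= be -> 0 < ph u < PI).
  { intros u Hu. destruct (Srange u Hu). unfold ph.
    assert (k*S u <= k*l) by (apply Rmult_le_compat_l; lra). assert (0 <= k*S u) by (apply Rmult_le_pos; lra). split; lra. }
  assert (sinp : forall u, al <= u <= be -> 0 < sin (ph u)).
  { intros u Hu. destruct (phr u Hu). apply sin_gt_0; auto. }
  set (c := fun u => cos (ph u) / sin (ph u)).
  assert (dc : forall u, al <= u <= be -> derivable_pt_lim c u (- k * sg u * (1 + c u ^2))).
  { intros u Hu. specialize (sinp u Hu). eapply dpl_eq. apply dpl_div.
    apply (dpl_comp cos ph). apply dph. apply derivable_pt_lim_cos.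
    apply (dpl_comp sin ph). apply dph. apply derivable_pt_lim_sin. lra.
    unfold c. assert (E := sin2_cos2 (ph u)). unfold Rsqr in E. field_simplify; [|lra|lra].
    replace (cos (ph u) ^ 2) with (1 - sin (ph u) ^2) by (simpl; lra). field. lra. }
  assert (cc : forall u, al <= u <= be -> continuity_pt c u).
  { intros u Hu. specialize (sinp u Hu). apply cp_div.
    apply (cp_comp cos ph). eapply dpl_cont; apply dph. apply continuity_cos.
    apply (cp_comp sin ph). eapply dpl_cont; apply dph. apply continuity_sin. lra. }
  set (F := fun u => h u ^2 * c u).
  set (F' := fun u => 2 * h u * h1 u * c u - k * sg u * h u ^2 * (1 + c u ^2)).
  assert (dF : forall u, al <= u <= be -> derivable_pt_lim F u (F' u)).
  { intros u Hu. eapply dpl_eq. apply dpl_mult. apply dpl_sq. apply Dh. apply dc; auto.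
    unfold F'; ring. }
  assert (Ch : forall u, continuity_pt h u) by (intros; eapply dpl_cont; apply Dh).
  assert (cF' : forall u, al <= u <= be -> continuity_pt F' u).
  { intros u Hu. unfold F'. repeat first [apply cc; auto | apply cp_minus | apply cp_mult | apply cp_plus | apply cp_pow | apply cp_const | auto]. }
  assert (IF : RInt F' al be = 0).
  { rewrite (ftc F F' al be); [|lra|auto|auto]. unfold F. rewrite Ha, Hb.
    assert (E0 : forall z:R, 0 ^ 2 * z = 0) by (intros; ring). rewrite !E0. apply Rminus_diag_eq. reflexivity. }
  set (G := fun u => (h1 u - k * sg u * h u * c u)^2 / sg u).
  assert (cG : forall u, al <= u <= be -> continuity_pt G u).
  { intros u Hu. unfold G. apply cp_div; [|auto|specialize (Psg u); lra].
    apply cp_pow. apply cp_minus; auto. apply cp_mult; [|apply cc; auto]. repeat apply cp_mult; auto using cp_const. }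
  assert (cX : forall u, al <= u <= be -> continuity_pt (fun u => sg u * h u ^2) u).
  { intros. apply cp_mult; auto. apply cp_pow; auto. }
  assert (E : RInt (fun u => h1 u ^2 / sg u) al be =
              RInt (fun u => G u + k * F' u + k^2 * (sg u * h u ^2)) al be).
  { apply RInt_extR; [lra|]. intros u Hu. unfold G, F'. specialize (Psg u). field. lra. }
  rewrite E. rewrite RInt_add, RInt_add, RInt_scl, RInt_scl, IF.
  assert (0 <= RInt G al be). { apply RInt_nonneg. lra. apply exR; auto; lra.
    intros u Hu; unfold G. apply Rmult_le_pos. apply pow2_ge_0. left; apply Rinv_0_lt_compat; auto. }
  lra.
  all: try (apply exR; [lra|]); intros; auto.
  all: try (apply cp_mult; [apply cp_const|]); auto.
  all: try (apply cp_plus; auto).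
  all: try (apply cp_mult; [apply cp_const|]); auto.
Qed.

Lemma wirt (sg h h1 : R -> R) al be :
 al < be -> (forall u, continuity_pt sg u) -> (forall u, 0 < sg u) ->
 (forall u, derivable_pt_lim h u (h1 u)) -> (forall u, continuity_pt h1 u) ->
 h al = 0 -> h be = 0 ->
 (PI / RInt sg al be)^2 * RInt (fun u => sg u * h u ^2) al be <= RInt (fun u => h1 u ^2 / sg u) al be.
Proof.
  intros Hab Csg Psg Dh Ch1 Ha Hb.
  assert (Ch : forall u, continuity_pt h u) by (intros; eapply dpl_cont; apply Dh).
  assert (Hl : 0 < RInt sg al be).
  { apply RInt_gt_0; auto. intros; apply cp2c; auto. }
  set (l := RInt sg al be) in *.
  set (X := RInt (fun u => sg u * h u ^2) al be).
  set (Y := RInt (fun u => h1 u ^2 / sg u) al be).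
  assert (HY : 0 <= Y).
  { apply RInt_nonneg. lra. apply exR. lra. intros; apply cp_div; auto. apply cp_pow; auto.
    specialize (Psg z); lra.
    intros u _. apply Rmult_le_pos. apply pow2_ge_0. left; apply Rinv_0_lt_compat; auto. }
  destruct (Rle_or_lt ((PI / l)^2 * X) Y) as [H|H]; [exact H|exfalso].
  assert (PIl : 0 < PI / l) by (apply Rdiv_lt_0_compat; [apply PI_RGT_0|auto]).
  assert (HX : 0 < X).
  { destruct (Rle_or_lt X 0); auto. assert ((PI/l)^2 * X <= 0); [|lra].
    assert (0 <= (PI/l)^2) by apply pow2_ge_0. nra. }
  set (r := sqrt (Y / X)).
  assert (Hr0 : 0 <= r) by apply sqrt_pos.
  assert (Hr2 : r ^ 2 = Y / X) by (unfold r; rewrite <- Rsqr_pow2; apply Rsqr_sqrt; apply Rdiv_le_0_compat; lra).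
  assert (HYX : Y / X < (PI / l)^2).
  { apply (Rmult_lt_reg_r X); auto. unfold Rdiv at 1. rewrite Rmult_assoc, Rinv_l by lra. lra. }
  assert (Hrl : r < PI / l) by nra.
  set (k := (r + PI / l) / 2).
  assert (Hk : 0 < k) by (unfold k; lra).
  assert (Hkl : k * l < PI).
  { assert (k < PI / l) by (unfold k; lra). apply (Rmult_lt_compat_r l) in H0; auto.
    unfold Rdiv in H0. rewrite Rmult_assoc, Rinv_l in H0 by lra. lra. }
  pose proof (wirt_k sg h h1 al be k Hab Csg Psg Dh Ch1 Ha Hb Hk Hkl) as W.
  fold X Y in W.
  assert (r < k) by (unfold k; lra).
  assert (r^2 < k^2) by nra.
  assert (Y < k^2 * X).
  { replace Y with (r^2 * X). nra. rewrite Hr2. field. lra. }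
  lra.
Qed.

Lemma iso (a b a1 b1 : R -> R) :
 (forall u, derivable_pt_lim a u (a1 u)) -> (forall u, derivable_pt_lim b u (b1 u)) ->
 (forall u, continuity_pt a1 u) -> (forall u, continuity_pt b1 u) ->
 a 1 = a 0 -> b 1 = b 0 -> (forall u, 0 < sqrt (a1 u ^2 + b1 u ^2)) ->
 4 * PI * (1/2 * RInt (fun u => a u * b1 u - b u * a1 u) 0 1)
   <= (RInt (fun u => sqrt (a1 u ^2 + b1 u ^2)) 0 1)^2.
Proof.
  intros Da Db Ca1 Cb1 Pa Pb Psg.
  assert (Ca : forall u, continuity_pt a u) by (intros; eapply dpl_cont; apply Da).
  assert (Cb : forall u, continuity_pt b u) by (intros; eapply dpl_cont; apply Db).
  set (sg := fun u => sqrt (a1 u ^2 + b1 u ^2)) in *.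
  assert (Psg' : forall u, 0 < sg u) by exact Psg.
  assert (Csg : forall u, continuity_pt sg u).
  { intros u; unfold sg; apply cp_sqrt. cont. apply Rplus_le_le_0_compat; apply pow2_ge_0. }
  assert (HL : 0 < RInt sg 0 1).
  { apply RInt_gt_0. lra. intros; auto. intros; apply cp2c; auto. }
  set (L := (RInt sg 0 1 : R)) in *.
  set (S := fun u => RInt sg 0 u).
  assert (dS : forall u, derivable_pt_lim S u (sg u)) by (intros; apply dRInt; auto).
  assert (S0 : S 0 = 0) by (unfold S; rewrite RInt_point; reflexivity).
  assert (S1 : S 1 = L) by reflexivity.
  destruct (IVT_gen S 0 1 (L/2)) as [m [Hm Sm]].
  { intros u; eapply dpl_cont; apply dS. }
  { rewrite S0, S1. rewrite Rmin_left, Rmax_right by lra. lra. }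
  rewrite Rmin_left, Rmax_right in Hm by lra.
  assert (Hm0 : 0 < m). { destruct (Req_dec m 0) as [E|E]; [|lra]. rewrite E, S0 in Sm; lra. }
  assert (Hm1 : m < 1). { destruct (Req_dec m 1) as [E|E]; [|lra]. rewrite E, S1 in Sm; lra. }
  assert (I1 : @eq R (RInt sg 0 m) (L/2)) by exact Sm.
  assert (I2 : @eq R (RInt sg m 1) (L/2)).
  { assert (E := RInt_chasles sg 0 m 1). rewrite I1 in E. fold L in E.
    assert (E' := E ltac:(apply exR; auto; lra) ltac:(apply exR; auto; lra)). lra. }
  set (p := a m - a 0). set (q := b m - b 0).
  assert (Hcd : exists c d, c^2 + d^2 = 1 /\ - p * d + q * c = 0).
  { destruct (Req_dec (p^2+q^2) 0) as [E|E].
    - exists 1, 0. split. ring. assert (q = 0) by nra. subst; rewrite H; ring.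
    - assert (Hr : 0 < p^2+q^2) by (assert (0 <= p^2+q^2) by nra; lra).
      set (r := sqrt (p^2+q^2)).
      assert (r0 : 0 < r) by (apply sqrt_lt_R0; auto).
      assert (r2 : r^2 = p^2+q^2) by (unfold r; rewrite <- Rsqr_pow2; apply Rsqr_sqrt; lra).
      exists (p/r), (q/r). split. field_simplify; [|lra]. rewrite r2. field. lra. field. lra. }
  destruct Hcd as [c [d [Hcd Hpq]]].
  set (h := fun u => - (a u - a 0) * d + (b u - b 0) * c).
  set (h1 := fun u => - a1 u * d + b1 u * c).
  set (g := fun u => (a u - a 0) * c + (b u - b 0) * d).
  set (g1 := fun u => a1 u * c + b1 u * d).
  assert (Dh : forall u, derivable_pt_lim h u (h1 u)).
  { intros u. eapply dpl_eq. apply dpl_plus; apply (dpl_mult _ (fun _ => _)).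
    apply dpl_opp, dpl_minus. apply Da. apply dpl_const. apply dpl_const.
    apply dpl_minus. apply Db. apply dpl_const. apply dpl_const. unfold h1; ring. }
  assert (Dg : forall u, derivable_pt_lim g u (g1 u)).
  { intros u. eapply dpl_eq. apply dpl_plus; apply (dpl_mult _ (fun _ => _)).
    apply dpl_minus. apply Da. apply dpl_const. apply dpl_const.
    apply dpl_minus. apply Db. apply dpl_const. apply dpl_const. unfold g1; ring. }
  assert (Ch1 : forall u, continuity_pt h1 u) by (intros; unfold h1; cont).
  assert (Cg1 : forall u, continuity_pt g1 u) by (intros; unfold g1; cont).
  assert (Ch : forall u, continuity_pt h u) by (intros; unfold h; cont).
  assert (Cg : forall u, continuity_pt g u) by (intros; unfold g; cont).
  assert (h0 : h 0 = 0) by (unfold h; ring).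
  assert (hm : h m = 0) by (unfold h; fold p q; lra).
  assert (hone : h 1 = 0) by (unfold h; rewrite Pa, Pb; ring).
  set (k := 2 * PI / L).
  assert (Hk : 0 < k) by (unfold k; apply Rdiv_lt_0_compat; [apply Rmult_lt_0_compat; [lra|apply PI_RGT_0]|auto]).
  pose proof (wirt sg h h1 0 m Hm0 Csg Psg' Dh Ch1 h0 hm) as W1.
  pose proof (wirt sg h h1 m 1 Hm1 Csg Psg' Dh Ch1 hm hone) as W2.
  rewrite I1 in W1. rewrite I2 in W2.
  replace (PI / (L/2)) with k in W1, W2 by (unfold k; field; lra).
  set (fX := fun u => sg u * h u ^2) in *.
  set (fY := fun u => h1 u ^2 / sg u) in *.
  assert (CX : forall u, continuity_pt fX u) by (intros; unfold fX; cont).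
  assert (sgnz : forall u, sg u <> 0) by (intros u; specialize (Psg' u); lra).
  assert (CY : forall u, continuity_pt fY u) by (intros; unfold fY; apply cp_div; cont; auto).
  assert (EX : forall f, (forall u, continuity_pt f u) -> forall x y, x <= y -> ex_RInt f x y).
  { intros f Hf x y Hxy. apply exR; auto. }
  assert (WX : k^2 * RInt fX 0 1 <= RInt fY 0 1).
  { rewrite <- (RInt_chasles fX 0 m 1), <- (RInt_chasles fY 0 m 1) by (apply EX; auto; lra). lra. }
  set (Fn := fun u => g u * h u + a 0 * b u - b 0 * a u).
  set (Fn' := fun u => g1 u * h u + g u * h1 u + a 0 * b1 u - b 0 * a1 u).
  assert (DFn : forall u, derivable_pt_lim Fn u (Fn' u)).
  { intros u. eapply dpl_eq. apply dpl_minus. apply dpl_plus. apply dpl_mult. apply Dg. apply Dh.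
    apply dpl_scal, Db. apply dpl_scal, Da. unfold Fn'; ring. }
  assert (IFn : @eq R (RInt Fn' 0 1) 0).
  { rewrite (ftc Fn Fn' 0 1); [|lra|auto|intros; unfold Fn'; cont]. unfold Fn. rewrite h0, hone, Pa, Pb. ring. }
  assert (EA : @eq R (RInt (fun u => a u * b1 u - b u * a1 u) 0 1) (RInt (fun u => -2 * (h u * g1 u) + Fn' u) 0 1)).
  { apply RInt_extR; [lra|]. intros u _. unfold Fn', h, g, h1, g1.
    match goal with |- ?l = ?r => assert (l - r = ((a u - a 0) * b1 u - (b u - b 0) * a1 u) * (1 - (c^2+d^2))) by ring end.
    rewrite Hcd in H. lra. }
  rewrite EA, RInt_add, IFn, RInt_scl by (apply EX; [intros; unfold Fn'; cont|lra]).
  assert (e1 : ex_RInt fX 0 1) by (apply EX; [intros; cont|lra]).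
  assert (e2 : ex_RInt (fun u => g1 u ^2 / sg u) 0 1) by (apply EX; [intros; cont|lra]).
  assert (B : RInt (fun u => - (h u * g1 u)) 0 1 <= k / 2 * RInt fX 0 1 + / (2 * k) * RInt (fun u => g1 u ^2 / sg u) 0 1).
  { rewrite <- (RInt_scl (k/2) fX 0 1 e1), <- (RInt_scl _ _ 0 1 e2).
    rewrite <- RInt_add by (apply EX; [intros; unfold fX; cont|lra]).
    apply RInt_mono. lra. apply EX; [intros; cont|lra]. apply EX; [intros; unfold fX; cont|lra].
    intros u _. unfold fX. specialize (Psg' u). set (s := sg u) in *.
    assert (0 <= (k * s * h u + g1 u)^2) by apply pow2_ge_0.
    assert (E : k / 2 * (s * h u ^ 2) + / (2 * k) * (g1 u ^ 2 / s) - - (h u * g1 u) = (k * s * h u + g1 u)^2 / (2 * k * s)) by (field; lra).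
    assert (0 <= (k * s * h u + g1 u)^2 / (2 * k * s)). apply Rdiv_le_0_compat; auto. nra. lra. }
  assert (EL : @eq R (RInt fY 0 1 + RInt (fun u => g1 u ^2 / sg u) 0 1) L).
  { rewrite <- RInt_add. unfold L. apply RInt_extR; [lra|]. intros u _. unfold fY, sg, h1, g1.
    assert (E2 : (- a1 u * d + b1 u * c) ^ 2 + (a1 u * c + b1 u * d)^2 = a1 u ^2 + b1 u ^2).
    { match goal with |- ?l = ?r => assert (l - r = (a1 u ^2 + b1 u ^2) * (c^2+d^2 - 1)) by ring end. rewrite Hcd in H. lra. }
    specialize (Psg u). unfold sg in Psg. set (s := sqrt (a1 u ^2 + b1 u ^2)) in *.
    assert (s ^2 = a1 u ^2 + b1 u ^2) by (unfold s; rewrite <- Rsqr_pow2; apply Rsqr_sqrt; nra).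
    field_simplify; [|lra].
    replace (a1 u ^ 2 * d ^ 2 + a1 u ^ 2 * c ^ 2 + d ^ 2 * b1 u ^ 2 + b1 u ^ 2 * c ^ 2) with (s^2)
      by (rewrite H; transitivity ((a1 u^2+b1 u^2)*(c^2+d^2)); [rewrite Hcd; ring|ring]).
    field. lra.
    apply EX; auto; lra. apply EX; [intros; apply cp_div; cont; auto|lra]. }
  assert (Hk2 : k * L = 2 * PI) by (unfold k; field; lra).
  assert (HR : @eq R (RInt (fun u => - (h u * g1 u)) 0 1) (- RInt (fun u => h u * g1 u) 0 1)).
  { rewrite (RInt_extR (fun u => -(h u * g1 u)) (fun u => (-1) * (h u * g1 u)) 0 1); [|lra|intros; ring].
    rewrite RInt_scl; [ring|]. apply EX; [intros; cont|lra]. }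
  rewrite HR in B.
  assert (k / 2 * RInt fX 0 1 <= / (2*k) * RInt fY 0 1).
  { apply (Rmult_le_reg_l (2 * k)). lra. assert (Ez : forall z : R, 2 * k * (/ (2 * k) * z) = z) by (intros; field; lra). rewrite Ez. nra. }
  assert (EL2 : / (2*k) * RInt fY 0 1 + / (2*k) * RInt (fun u => g1 u ^2 / sg u) 0 1 = / (2*k) * L)
    by (rewrite <- Rmult_plus_distr_l, EL; reflexivity).
  assert (Hfin : - RInt (fun u => h u * g1 u) 0 1 <= / (2*k) * L) by lra.
  assert (HH : / (2 * k) * L = L^2 / (4 * PI)) by (unfold k; field; repeat split; first [apply PI_neq0 | lra]).
  assert (HPI := PI_RGT_0).
  apply (Rmult_le_compat_l (4 * PI)) in Hfin; [|lra].
  assert (Ez2 : forall z:R, 4*PI*(1/2*(-2*z+0)) = 4*PI*(-z)) by (intros; field). rewrite Ez2.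
  rewrite HH in Hfin. replace (4 * PI * (L ^ 2 / (4 * PI))) with (L^2) in Hfin by (field; lra). exact Hfin.
Qed.

Lemma deriv1_eq h x l : derivable_pt_lim h x l -> deriv1 h x = l.
Proof.
  intros H. unfold deriv1. destruct excluded_middle_informative as [E|E].
  - destruct constructive_indefinite_description as [l' Hl']. simpl.
    exact (uniqueness_limite h x l' l Hl' H).
  - exfalso; apply E; exists l; exact H.
Qed.

Lemma integ_RInt f a b : ex_RInt f a b -> integ f a b = RInt f a b.
Proof.
  intros H. unfold integ. destruct excluded_middle_informative as [E|E].
  - destruct constructive_indefinite_description as [pr HH]. simpl.
    symmetry; apply RInt_Reals.
  - exfalso; apply E. exists (ex_RInt_Reals_0 f a b H); exact I.
Qed.

Lemma c2_of_rel G u t : cont2_rel (fun _ => True) G u t -> continuity_2d_pt G u t.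
Proof.
  intros H eps. destruct (H eps (cond_pos eps)) as [del [Hd H']].
  exists (mkposreal del Hd). intros u' t' H1 H2. apply H'; auto.
Qed.

Lemma c2_swap G u t : continuity_2d_pt G u t -> continuity_2d_pt (fun a b => G b a) t u.
Proof.
  intros H eps. destruct (H eps) as [d Hd]. exists d. intros a b H1 H2. apply Hd; auto.
Qed.

Lemma c2_cont_u G u t : continuity_2d_pt G u t -> continuity_pt (fun v => G v t) u.
Proof.
  intros H. intros eps Heps. destruct (H (mkposreal eps Heps)) as [d Hd].
  exists d. split. apply cond_pos. intros v [_ Hv]. simpl in *. unfold R_dist in *.
  apply Hd; auto. rewrite Rminus_diag, Rabs_R0; apply cond_pos.
Qed.

Lemma c2_sqrt G u t : continuity_2d_pt G u t -> 0 <= G u t -> continuity_2d_pt (fun a b => sqrt (G a b)) u t.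
Proof. intros. apply continuity_1d_2d_pt_comp; auto. apply continuity_pt_sqrt; auto. Qed.

Lemma c2_pow G u t n : continuity_2d_pt G u t -> continuity_2d_pt (fun a b => G a b ^ n) u t.
Proof. intros. induction n; simpl. apply continuity_2d_pt_const. apply continuity_2d_pt_mult; auto. Qed.

Lemma c2_div F G u t : continuity_2d_pt F u t -> continuity_2d_pt G u t -> G u t <> 0 ->
  continuity_2d_pt (fun a b => F a b / G a b) u t.
Proof. intros. apply continuity_2d_pt_mult; auto. apply continuity_2d_pt_inv; auto. Qed.

Ltac cont2 := repeat first [ solve [auto] | apply continuity_2d_pt_const | apply continuity_2d_pt_plus
  | apply continuity_2d_pt_minus | (apply c2_div; [ | | solve [auto]]) | apply continuity_2d_pt_mult
  | apply continuity_2d_pt_opp | apply c2_pow ].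

Lemma loc_int (P : R -> Prop) T t : 0 < t < T -> (forall s, 0 < s < T -> P s) -> locally t P.
Proof.
  intros Ht H. assert (Hd : 0 < Rmin t (T - t)) by (apply Rmin_pos; lra).
  exists (mkposreal _ Hd). intros s Hs. apply H.
  unfold ball in Hs; simpl in Hs; unfold AbsRing_ball, abs, minus, plus, opp in Hs; simpl in Hs.
  assert (Rmin t (T - t) <= t) by apply Rmin_l. assert (Rmin t (T - t) <= T - t) by apply Rmin_r.
  apply Rabs_def2 in Hs. lra.
Qed.

Lemma loc2_int (P : R -> R -> Prop) T u t : 0 < t < T -> (forall a b, 0 < b < T -> P a b) -> locally_2d P u t.
Proof.
  intros Ht H. assert (Hd : 0 < Rmin t (T - t)) by (apply Rmin_pos; lra).
  exists (mkposreal _ Hd). intros a b _ Hb. apply H. simpl in Hb.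
  assert (Rmin t (T - t) <= t) by apply Rmin_l. assert (Rmin t (T - t) <= T - t) by apply Rmin_r.
  apply Rabs_def2 in Hb. lra.
Qed.

Section Smooth.
Variables (F : R -> R -> R) (T : R).
Hypothesis HS : smooth_on F T.

Lemma sm_u k u t : 0 <= t < T ->
  derivable_pt_lim (fun v => dw (List.repeat true k) F v t) u (dw (List.repeat true (S k)) F u t).
Proof.
  intros Ht. destruct HS as [_ H2]. destruct (H2 k u t Ht) as [[l Hl] _].
  change (dw (List.repeat true (S k)) F u t) with (pu (dw (List.repeat true k) F) u t).
  unfold pu. rewrite (deriv1_eq _ _ _ Hl). exact Hl.
Qed.

Lemma sm_rc k u : 0 < T -> cont2_rel (fun s => 0 <= s < T) (dw (List.repeat true k) F) u 0.
Proof. intros HT. destruct HS as [_ H2]. apply (H2 k u 0). lra. Qed.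

Lemma sm_du w u t : 0 < t < T -> derivable_pt_lim (fun v => dw w F v t) u (dw (true :: w) F u t).
Proof.
  intros Ht. destruct HS as [H1 _]. destruct (H1 w u t Ht) as [_ [[l Hl] _]].
  change (dw (true :: w) F u t) with (pu (dw w F) u t).
  unfold pu. rewrite (deriv1_eq _ _ _ Hl). exact Hl.
Qed.

Lemma sm_dt w u t : 0 < t < T -> derivable_pt_lim (fun s => dw w F u s) t (dw (false :: w) F u t).
Proof.
  intros Ht. destruct HS as [H1 _]. destruct (H1 w u t Ht) as [_ [_ [l Hl]]].
  change (dw (false :: w) F u t) with (pt (dw w F) u t).
  unfold pt. rewrite (deriv1_eq _ _ _ Hl). exact Hl.
Qed.

Lemma sm_c2 w u t : 0 < t < T -> continuity_2d_pt (dw w F) u t.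
Proof. intros Ht. destruct HS as [H1 _]. destruct (H1 w u t Ht) as [H _]. apply c2_of_rel; auto. Qed.

End Smooth.

Set Default Proof Using "All".
Section Geo.
Variables (x y : R -> R -> R) (T : R).
Hypothesis Sx : smooth_on x T.
Hypothesis Sy : smooth_on y T.
Hypothesis Hreg : forall u t, 0 <= t < T -> 0 < speed x y u t.

Section FixT.
Variable t : R.
Hypothesis Ht : 0 <= t < T.

Lemma gx0 u : derivable_pt_lim (fun v => x v t) u (pu x u t).
Proof. exact (sm_u x T Sx 0 u t Ht). Qed.
Lemma gx1 u : derivable_pt_lim (fun v => pu x v t) u (pu (pu x) u t).
Proof. exact (sm_u x T Sx 1 u t Ht). Qed.
Lemma gx2 u : derivable_pt_lim (fun v => pu (pu x) v t) u (pu (pu (pu x)) u t).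
Proof. exact (sm_u x T Sx 2 u t Ht). Qed.
Lemma gy0 u : derivable_pt_lim (fun v => y v t) u (pu y u t).
Proof. exact (sm_u y T Sy 0 u t Ht). Qed.
Lemma gy1 u : derivable_pt_lim (fun v => pu y v t) u (pu (pu y) u t).
Proof. exact (sm_u y T Sy 1 u t Ht). Qed.
Lemma gy2 u : derivable_pt_lim (fun v => pu (pu y) v t) u (pu (pu (pu y)) u t).
Proof. exact (sm_u y T Sy 2 u t Ht). Qed.

Lemma cx0 u : continuity_pt (fun v => x v t) u.  Proof. eapply dpl_cont; apply gx0. Qed.
Lemma cx1 u : continuity_pt (fun v => pu x v t) u.  Proof. eapply dpl_cont; apply gx1. Qed.
Lemma cx2 u : continuity_pt (fun v => pu (pu x) v t) u.  Proof. eapply dpl_cont; apply gx2. Qed.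
Lemma cy0 u : continuity_pt (fun v => y v t) u.  Proof. eapply dpl_cont; apply gy0. Qed.
Lemma cy1 u : continuity_pt (fun v => pu y v t) u.  Proof. eapply dpl_cont; apply gy1. Qed.
Lemma cy2 u : continuity_pt (fun v => pu (pu y) v t) u.  Proof. eapply dpl_cont; apply gy2. Qed.

Lemma spnz u : speed x y u t <> 0.
Proof. specialize (Hreg u t Ht); lra. Qed.

Lemma sp_sq u : speed x y u t ^ 2 = pu x u t ^ 2 + pu y u t ^ 2.
Proof. unfold speed. rewrite <- Rsqr_pow2. apply Rsqr_sqrt. nra. Qed.

Lemma gsp u : derivable_pt_lim (fun v => speed x y v t) u
   ((pu x u t * pu (pu x) u t + pu y u t * pu (pu y) u t) / speed x y u t).
Proof.
  assert (H := Hreg u t Ht). unfold speed in *.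
  eapply dpl_eq. apply dpl_sqrt. apply dpl_plus; apply dpl_sq; [apply gx1|apply gy1].
  destruct (Rle_or_lt (pu x u t ^ 2 + pu y u t ^ 2) 0) as [E|E]; auto.
  rewrite sqrt_neg_0 in H; lra. cbv beta. field. lra.
Qed.

Lemma csp u : continuity_pt (fun v => speed x y v t) u.
Proof. eapply dpl_cont; apply gsp. Qed.

Lemma gds u : derivable_pt_lim (fun v => ds x y x v t) u
  ((pu (pu x) u t * speed x y u t - pu x u t * ((pu x u t * pu (pu x) u t + pu y u t * pu (pu y) u t) / speed x y u t)) / speed x y u t ^ 2).
Proof. unfold ds; cbv beta. apply (dpl_div (fun v => pu x v t) (fun v => speed x y v t)). apply gx1. apply gsp. apply spnz. Qed.
Lemma gdsy u : derivable_pt_lim (fun v => ds x y y v t) u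
  ((pu (pu y) u t * speed x y u t - pu y u t * ((pu x u t * pu (pu x) u t + pu y u t * pu (pu y) u t) / speed x y u t)) / speed x y u t ^ 2).
Proof. unfold ds; cbv beta. apply (dpl_div (fun v => pu y v t) (fun v => speed x y v t)). apply gy1. apply gsp. apply spnz. Qed.

Lemma kap u : kappa x y u t = (pu x u t * pu (pu y) u t - pu y u t * pu (pu x) u t) / speed x y u t ^ 3.
Proof.
  unfold kappa, nux, nuy.
  change (ds x y (ds x y x) u t) with (deriv1 (fun v => ds x y x v t) u / speed x y u t).
  change (ds x y (ds x y y) u t) with (deriv1 (fun v => ds x y y v t) u / speed x y u t).
  rewrite (deriv1_eq _ _ _ (gds u)), (deriv1_eq _ _ _ (gdsy u)).
  unfold ds. assert (H := spnz u). field. auto.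
Qed.

Lemma ckap u : continuity_pt (fun v => kappa x y v t) u.
Proof.
  eapply cp_ext. intros v; symmetry; apply kap.
  apply cp_div. apply cp_minus; apply cp_mult; auto using cx1, cx2, cy1, cy2.
  apply cp_pow, csp. apply pow_nonzero, spnz.
Qed.

Lemma dkap u : Dx (fun v => kappa x y v t) u.
Proof.
  eapply Dx_ext. intros v; symmetry; apply kap.
  apply Dx_div. apply Dx_minus; apply Dx_mult; eapply Dx_of; eauto using gx1, gx2, gy1, gy2.
  apply Dx_pow; eapply Dx_of; apply gsp. apply pow_nonzero, spnz.
Qed.

End FixT.
End Geo.
Unset Default Proof Using.

Lemma loc2_int1 (P : R -> R -> Prop) T a b : 0 < a < T -> (forall a' b', 0 < a' < T -> P a' b') -> locally_2d P a b.
Proof.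
  intros Ht H. assert (Hd : 0 < Rmin a (T - a)) by (apply Rmin_pos; lra).
  exists (mkposreal _ Hd). intros a' b' Ha _. apply H. simpl in Ha.
  assert (Rmin a (T - a) <= a) by apply Rmin_l. assert (Rmin a (T - a) <= T - a) by apply Rmin_r.
  apply Rabs_def2 in Ha. lra.
Qed.

Lemma Derive_dpl f x l : derivable_pt_lim f x l -> Derive f x = l.
Proof. intros H. apply is_derive_unique. apply is_derive_Reals; auto. Qed.

Section Sch.
Variables (F : R -> R -> R) (T : R).
Hypothesis HS : smooth_on F T.

Lemma D_t a b : 0 < b < T -> Derive (fun t0 => F a t0) b = pt F a b.
Proof. intros; apply Derive_dpl. exact (sm_dt F T HS nil a b H). Qed.

Lemma D_u a b : 0 < b < T -> Derive (fun z => F z b) a = pu F a b.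
Proof. intros; apply Derive_dpl. exact (sm_du F T HS nil a b H). Qed.

Lemma D_ut a b : 0 < b < T -> Derive (fun z => Derive (fun t0 => F z t0) b) a = pu (pt F) a b.
Proof.
  intros Hb. rewrite (Derive_ext _ (fun z => pt F z b)) by (intros; apply D_t; auto).
  apply Derive_dpl. exact (sm_du F T HS (false :: nil) a b Hb).
Qed.

Lemma is_D_tu a b : 0 < b < T -> is_derive (fun z => Derive (fun t0 => F t0 z) a) b (pt (pu F) a b).
Proof.
  intros Hb. apply (is_derive_ext_loc (fun z => pu F a z)).
  apply (loc_int _ T b Hb). intros s Hs. symmetry; apply D_u; auto.
  apply is_derive_Reals. exact (sm_dt F T HS (true :: nil) a b Hb).
Qed.

Lemma D_tu a b : 0 < b < T -> Derive (fun z => Derive (fun t0 => F t0 z) a) b = pt (pu F) a b.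
Proof. intros; apply is_derive_unique, is_D_tu; auto. Qed.

Lemma schwarz u t : 0 < t < T -> pt (pu F) u t = pu (pt F) u t.
Proof.
  intros Ht. rewrite <- D_tu, <- D_ut by auto. symmetry. apply Schwarz.
  - apply (loc2_int _ T u t Ht). intros a b Hb. split; [|split; [|split]].
    + exists (pu F a b). apply is_derive_Reals. exact (sm_du F T HS nil a b Hb).
    + exists (pt F a b). apply is_derive_Reals. exact (sm_dt F T HS nil a b Hb).
    + apply (ex_derive_ext (fun z => pt F z b)). intros; symmetry; apply D_t; auto.
      exists (pu (pt F) a b). apply is_derive_Reals. exact (sm_du F T HS (false :: nil) a b Hb).
    + exists (pt (pu F) a b). apply is_D_tu; auto.
  - apply (continuity_2d_pt_ext_loc (pu (pt F))).
    apply (loc2_int _ T u t Ht). intros a b Hb. symmetry; apply D_ut; auto.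
    exact (sm_c2 F T HS (true :: false :: nil) u t Ht).
  - apply (continuity_2d_pt_ext_loc (pt (pu F))).
    apply (loc2_int _ T u t Ht). intros a b Hb. symmetry; apply D_tu; auto.
    exact (sm_c2 F T HS (false :: true :: nil) u t Ht).
Qed.
End Sch.

Section Flow.
Variables (x y : R -> R -> R) (T : R) (Vf : R -> R -> R).
Hypothesis Sx : smooth_on x T.
Hypothesis Sy : smooth_on y T.
Hypothesis Hreg : forall u t, 0 <= t < T -> 0 < speed x y u t.
Hypothesis Hflow : forall u t, 0 < t < T ->
  pt x u t = Vf u t * nux x y u t /\ pt y u t = Vf u t * nuy x y u t.
Hypothesis HV : forall t, 0 < t < T -> forall u, Dx (fun v => Vf v t) u.
Hypothesis Hper : forall u t, 0 <= t < T -> x (u + 1) t = x u t /\ y (u + 1) t = y u t.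

Lemma sig_t u t : 0 < t < T ->
  (pu x u t * pt (pu x) u t + pu y u t * pt (pu y) u t) / speed x y u t
  = - Vf u t * kappa x y u t * speed x y u t.
Proof.
  intros Ht. assert (Ht' : 0 <= t < T) by lra.
  rewrite (schwarz x T Sx u t Ht), (schwarz y T Sy u t Ht).
  destruct (HV t Ht u) as [Vd HVd].
  assert (Hx : derivable_pt_lim (fun v => pt x v t) u
     (Vd * nux x y u t + Vf u t * - ((pu (pu y) u t * speed x y u t - pu y u t * ((pu x u t * pu (pu x) u t + pu y u t * pu (pu y) u t) / speed x y u t)) / speed x y u t ^ 2))).
  { apply (dpl_ext (fun v => Vf v t * nux x y v t)). intros v; symmetry; apply Hflow; auto.
    apply (dpl_mult (fun v => Vf v t) (fun v => nux x y v t)); auto.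
    unfold nux. apply (dpl_opp (fun v => ds x y y v t)). apply (gdsy x y T Sx Sy Hreg t Ht'). }
  assert (Hy : derivable_pt_lim (fun v => pt y v t) u
     (Vd * nuy x y u t + Vf u t * ((pu (pu x) u t * speed x y u t - pu x u t * ((pu x u t * pu (pu x) u t + pu y u t * pu (pu y) u t) / speed x y u t)) / speed x y u t ^ 2))).
  { apply (dpl_ext (fun v => Vf v t * nuy x y v t)). intros v; symmetry; apply Hflow; auto.
    apply (dpl_mult (fun v => Vf v t) (fun v => nuy x y v t)); auto.
    unfold nuy. apply (gds x y T Sx Sy Hreg t Ht'). }
  change (pu (pt x) u t) with (deriv1 (fun v => pt x v t) u).
  change (pu (pt y) u t) with (deriv1 (fun v => pt y v t) u).
  rewrite (deriv1_eq _ _ _ Hx), (deriv1_eq _ _ _ Hy).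
  rewrite (kap x y T Sx Sy Hreg t Ht'). unfold nux, nuy, ds.
  assert (H := spnz x y T Sx Sy Hreg t Ht' u). field. auto.
Qed.

Lemma sp_t u t : 0 < t < T -> derivable_pt_lim (fun s => speed x y u s) t
   ((pu x u t * pt (pu x) u t + pu y u t * pt (pu y) u t) / speed x y u t).
Proof.
  intros Ht. assert (Ht' : 0 <= t < T) by lra. assert (H := Hreg u t Ht'). unfold speed in *.
  eapply dpl_eq. apply dpl_sqrt. apply dpl_plus; apply dpl_sq.
  exact (sm_dt x T Sx (true :: nil) u t Ht). exact (sm_dt y T Sy (true :: nil) u t Ht).
  destruct (Rle_or_lt (pu x u t ^ 2 + pu y u t ^ 2) 0) as [E|E]; auto.
  rewrite sqrt_neg_0 in H; lra. cbv beta. change (dw (false :: true :: nil) x u t) with (pt (pu x) u t). change (dw (false :: true :: nil) y u t) with (pt (pu y) u t). field. lra.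
Qed.

Lemma c2_speed u t : 0 < t < T -> continuity_2d_pt (speed x y) u t.
Proof.
  intros Ht. unfold speed. apply c2_sqrt. 2: nra.
  apply continuity_2d_pt_plus; apply c2_pow.
  exact (sm_c2 x T Sx (true :: nil) u t Ht). exact (sm_c2 y T Sy (true :: nil) u t Ht).
Qed.

Lemma Len_RInt s : 0 <= s < T -> Len x y s = RInt (fun v => speed x y v s) 0 1.
Proof.
  intros Hs. unfold Len, int_s. rewrite integ_RInt.
  apply RInt_extR; [lra|]. intros; ring.
  apply exR; [lra|]. intros; apply cp_mult; [apply cp_const|apply (csp x y T Sx Sy Hreg s Hs)].
Qed.

Lemma dLen t : 0 < t < T ->
  derivable_pt_lim (Len x y) t (- RInt (fun u => Vf u t * kappa x y u t * speed x y u t) 0 1).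
Proof.
  intros Ht.
  assert (HD : is_derive (fun z => RInt (fun v => speed x y v z) 0 1) t
                 (RInt (fun v => Derive (fun z => speed x y v z) t) 0 1)).
  { apply (is_derive_RInt_param (fun z v => speed x y v z)).
    - apply (loc_int _ T t Ht). intros s Hs v _. exists ((pu x v s * pt (pu x) v s + pu y v s * pt (pu y) v s) / speed x y v s).
      apply is_derive_Reals, sp_t; auto.
    - intros v _. apply (continuity_2d_pt_ext_loc (fun a b => (pu x b a * pt (pu x) b a + pu y b a * pt (pu y) b a) / speed x y b a)).
      apply (loc2_int1 _ T t v Ht). intros a b Ha. symmetry. apply Derive_dpl, sp_t; auto.
      apply (c2_swap (fun b a => (pu x b a * pt (pu x) b a + pu y b a * pt (pu y) b a) / speed x y b a)).
      assert (Ht' : 0 <= t < T) by lra.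
      apply c2_div.
      apply continuity_2d_pt_plus; apply continuity_2d_pt_mult.
      exact (sm_c2 x T Sx (true :: nil) v t Ht). exact (sm_c2 x T Sx (false :: true :: nil) v t Ht).
      exact (sm_c2 y T Sy (true :: nil) v t Ht). exact (sm_c2 y T Sy (false :: true :: nil) v t Ht).
      apply c2_speed; auto. apply (spnz x y T Sx Sy Hreg t Ht').
    - apply (loc_int _ T t Ht). intros s Hs. apply exR; [lra|]. intros; apply (csp x y T Sx Sy Hreg s); lra. }
  apply is_derive_Reals.
  apply (is_derive_ext_loc (fun z => RInt (fun v => speed x y v z) 0 1)).
  { apply (loc_int _ T t Ht). intros s Hs. symmetry; apply Len_RInt; lra. }
  replace (- RInt (fun u => Vf u t * kappa x y u t * speed x y u t) 0 1)
    with (RInt (fun v => Derive (fun z => speed x y v z) t) 0 1); auto.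
  rewrite <- (RInt_extR (fun u => - Vf u t * kappa x y u t * speed x y u t)); [|lra|].
  2: { intros v _. rewrite <- sig_t by auto. symmetry; apply Derive_dpl, sp_t; auto. }
  rewrite (RInt_extR _ (fun u => (-1) * (Vf u t * kappa x y u t * speed x y u t))) by (lra || (intros; ring)).
  rewrite RInt_scl. assert (Ez: forall z:R, -1 * z = - z) by (intros; ring). rewrite Ez. reflexivity.
  assert (Ht' : 0 <= t < T) by lra.
  apply exR; [lra|]. intros z _. apply cp_mult; [apply cp_mult|].
  destruct (HV t Ht z) as [l Hl]. eapply dpl_cont; eauto.
  apply (ckap x y T Sx Sy Hreg t Ht'). apply (csp x y T Sx Sy Hreg t Ht').
Qed.

Lemma ptper F t : (forall u s, 0 <= s < T -> F (u + 1) s = F u s) -> smooth_on F T -> 0 < t < T ->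
  pt F 1 t = pt F 0 t.
Proof.
  intros HP HS Ht. unfold pt. apply deriv1_eq. apply (dpl_ext_loc (fun s => F 0 s)).
  apply (loc_int _ T t Ht). intros s Hs. rewrite <- (HP 0 s) by lra. rewrite Rplus_0_l. reflexivity.
  exact (sm_dt F T HS nil 0 t Ht).
Qed.

Lemma Area_RInt s : 0 <= s < T ->
  Area x y s = - (1/2) * RInt (fun v => y v s * pu x v s - x v s * pu y v s) 0 1.
Proof.
  intros Hs. unfold Area, int_s.
  replace (fun u : R => (x u s * nux x y u s + y u s * nuy x y u s) * speed x y u s)
    with (fun v => y v s * pu x v s - x v s * pu y v s).
  rewrite integ_RInt. reflexivity.
  assert (C0 := cx0 x y T Sx Sy Hreg s Hs). assert (C1 := cy0 x y T Sx Sy Hreg s Hs).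
  assert (C2 := cx1 x y T Sx Sy Hreg s Hs). assert (C3 := cy1 x y T Sx Sy Hreg s Hs).
  apply exR; [lra|]. intros; cont.
  apply functional_extensionality. intros v. unfold nux, nuy, ds.
  assert (H := spnz x y T Sx Sy Hreg s Hs v). field. auto.
Qed.

Lemma dArea t : 0 < t < T ->
  derivable_pt_lim (Area x y) t (- RInt (fun u => Vf u t * speed x y u t) 0 1).
Proof.
  intros Ht. assert (Ht' : 0 <= t < T) by lra.
  set (P := fun v s => y v s * pu x v s - x v s * pu y v s).
  set (Pt := fun v s => pt y v s * pu x v s + y v s * pt (pu x) v s - (pt x v s * pu y v s + x v s * pt (pu y) v s)).
  assert (dP : forall v s, 0 < s < T -> derivable_pt_lim (fun z => P v z) s (Pt v s)).
  { intros v s Hs. unfold P, Pt. apply dpl_minus; apply dpl_mult.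
    exact (sm_dt y T Sy nil v s Hs). exact (sm_dt x T Sx (true :: nil) v s Hs).
    exact (sm_dt x T Sx nil v s Hs). exact (sm_dt y T Sy (true :: nil) v s Hs). }
  assert (HD : is_derive (fun z => RInt (fun v => P v z) 0 1) t
                 (RInt (fun v => Derive (fun z => P v z) t) 0 1)).
  { apply (is_derive_RInt_param (fun z v => P v z)).
    - apply (loc_int _ T t Ht). intros s Hs v _. exists (Pt v s). apply is_derive_Reals, dP; auto.
    - intros v _. apply (continuity_2d_pt_ext_loc (fun a b => Pt b a)).
      apply (loc2_int1 _ T t v Ht). intros a b Ha. symmetry. apply Derive_dpl, dP; auto.
      apply (c2_swap Pt). unfold Pt.
      apply continuity_2d_pt_minus; apply continuity_2d_pt_plus; apply continuity_2d_pt_mult.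
      exact (sm_c2 y T Sy (false :: nil) v t Ht). exact (sm_c2 x T Sx (true :: nil) v t Ht).
      exact (sm_c2 y T Sy nil v t Ht). exact (sm_c2 x T Sx (false :: true :: nil) v t Ht).
      exact (sm_c2 x T Sx (false :: nil) v t Ht). exact (sm_c2 y T Sy (true :: nil) v t Ht).
      exact (sm_c2 x T Sx nil v t Ht). exact (sm_c2 y T Sy (false :: true :: nil) v t Ht).
    - apply (loc_int _ T t Ht). intros s Hs. apply exR; [lra|]. intros; unfold P.
      assert (Hs' : 0 <= s < T) by lra.
      assert (C0 := cx0 x y T Sx Sy Hreg s Hs'). assert (C1 := cy0 x y T Sx Sy Hreg s Hs').
      assert (C2 := cx1 x y T Sx Sy Hreg s Hs'). assert (C3 := cy1 x y T Sx Sy Hreg s Hs'). cont. }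
  assert (C0 : forall u, continuity_pt (fun v => x v t) u) by apply (cx0 x y T Sx Sy Hreg t Ht').
  assert (C1 : forall u, continuity_pt (fun v => y v t) u) by apply (cy0 x y T Sx Sy Hreg t Ht').
  assert (C2 : forall u, continuity_pt (fun v => pu x v t) u) by apply (cx1 x y T Sx Sy Hreg t Ht').
  assert (C3 : forall u, continuity_pt (fun v => pu y v t) u) by apply (cy1 x y T Sx Sy Hreg t Ht').
  assert (C4 : forall u, continuity_pt (fun v => pt x v t) u) by (intros; eapply dpl_cont; exact (sm_du x T Sx (false :: nil) u t Ht)).
  assert (C5 : forall u, continuity_pt (fun v => pt y v t) u) by (intros; eapply dpl_cont; exact (sm_du y T Sy (false :: nil) u t Ht)).
  assert (C6 : forall u, continuity_pt (fun v => pu (pt x) v t) u) by (intros; apply c2_cont_u; exact (sm_c2 x T Sx (true :: false :: nil) u t Ht)).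
  assert (C7 : forall u, continuity_pt (fun v => pu (pt y) v t) u) by (intros; apply c2_cont_u; exact (sm_c2 y T Sy (true :: false :: nil) u t Ht)).
  assert (C8 : forall u, continuity_pt (fun v => speed x y v t) u) by apply (csp x y T Sx Sy Hreg t Ht').
  assert (C9 : forall u, continuity_pt (fun v => Vf v t) u) by (intros u; destruct (HV t Ht u) as [l Hl]; eapply dpl_cont; eauto).
  assert (EX : forall f, (forall u, continuity_pt f u) -> ex_RInt f 0 1) by (intros; apply exR; auto; lra).
  assert (parts : forall F G : R -> R -> R, smooth_on F T -> smooth_on G T ->
      (forall u s, 0 <= s < T -> F (u + 1) s = F u s) ->  (forall u s, 0 <= s < T -> G (u + 1) s = G u s) ->
      RInt (fun u => G u t * pu (pt F) u t) 0 1 = - RInt (fun u => pu G u t * pt F u t) 0 1).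
  { intros F G SF SG PF PG.
    assert (CF1 : forall u, continuity_pt (fun v => pt F v t) u) by (intros; eapply dpl_cont; exact (sm_du F T SF (false :: nil) u t Ht)).
    assert (CF2 : forall u, continuity_pt (fun v => pu (pt F) v t) u) by (intros; apply c2_cont_u; exact (sm_c2 F T SF (true :: false :: nil) u t Ht)).
    assert (CG0 : forall u, continuity_pt (fun v => G v t) u) by (intros; eapply dpl_cont; exact (sm_u G T SG 0 u t Ht')).
    assert (CG1 : forall u, continuity_pt (fun v => pu G v t) u) by (intros; eapply dpl_cont; exact (sm_u G T SG 1 u t Ht')).
    assert (E : RInt (fun u => pu G u t * pt F u t) 0 1 + RInt (fun u => G u t * pu (pt F) u t) 0 1
                = G 1 t * pt F 1 t - G 0 t * pt F 0 t).
    { rewrite <- RInt_add by (apply EX; intros; cont).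
      apply (ftc (fun u => G u t * pt F u t)). lra.
      intros u _. apply (dpl_mult (fun v => G v t) (fun v => pt F v t)). exact (sm_u G T SG 0 u t Ht'). exact (sm_du F T SF (false :: nil) u t Ht).
      intros; cont. }
    rewrite ptper in E by auto.
    assert (G 1 t = G 0 t) by (rewrite <- (PG 0 t Ht'), Rplus_0_l; reflexivity). rewrite H in E. lra. }
  assert (Px : forall u s, 0 <= s < T -> x (u + 1) s = x u s) by (intros; apply Hper; auto).
  assert (Py : forall u s, 0 <= s < T -> y (u + 1) s = y u s) by (intros; apply Hper; auto).
  assert (I2 := parts x y Sx Sy Px Py).
  assert (I3 := parts y x Sy Sx Py Px).
  assert (W : forall u, pt y u t * pu x u t - pt x u t * pu y u t = Vf u t * speed x y u t).
  { intros u. destruct (Hflow u t Ht) as [E1 E2]. rewrite E1, E2. unfold nux, nuy, ds.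
    assert (H := spnz x y T Sx Sy Hreg t Ht' u). field_simplify; auto.
    replace (Vf u t * pu x u t ^ 2 + Vf u t * pu y u t ^ 2) with (Vf u t * (pu x u t ^ 2 + pu y u t ^ 2)) by ring.
    rewrite <- (sp_sq x y T Sx Sy Hreg t Ht' u). field. auto. }
  assert (IP : RInt (fun v => Pt v t) 0 1 = 2 * RInt (fun u => Vf u t * speed x y u t) 0 1).
  { rewrite (RInt_extR _ (fun u => (pt y u t * pu x u t - pt x u t * pu y u t) + y u t * pu (pt x) u t - x u t * pu (pt y) u t)).
    2: lra. 2: { intros u _. unfold Pt. rewrite (schwarz x T Sx u t Ht), (schwarz y T Sy u t Ht). ring. }
    rewrite RInt_sub, RInt_add, I2, I3 by (apply EX; intros; cont).
    rewrite (RInt_extR _ _ 0 1 ltac:(lra) (fun u _ => W u)).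
    assert (E4 : RInt (fun u => pu x u t * pt y u t) 0 1 - RInt (fun u => pu y u t * pt x u t) 0 1 = RInt (fun u => Vf u t * speed x y u t) 0 1).
    { rewrite <- RInt_sub by (apply EX; intros; cont). apply RInt_extR; [lra|]. intros u _. rewrite <- W. ring. }
    lra. }
  apply (dpl_ext_loc (fun s => - (1/2) * RInt (fun v => P v s) 0 1)).
  { apply (loc_int _ T t Ht). intros s Hs. symmetry; apply Area_RInt; lra. }
  eapply dpl_eq. apply dpl_scal. apply is_derive_Reals. exact HD.
  rewrite (RInt_extR _ (fun v => Pt v t) 0 1); [|lra|intros; apply Derive_dpl, dP; auto].
  rewrite IP. field.
Qed.
End Flow.

Definition rc0 (h : R -> R) := forall eps, 0 < eps -> exists del, 0 < del /\
  forall s, 0 <= s < del -> Rabs (h s - h 0) < eps.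

Lemma clamp_c2 F T u : 0 < T -> cont2_rel (fun s => 0 <= s < T) F u 0 ->
  continuity_2d_pt (fun a s => F a (Rmax 0 s)) u 0.
Proof.
  intros HT H eps. destruct (H eps (cond_pos eps)) as [del [Hd H']].
  assert (Hm : 0 < Rmin del T) by (apply Rmin_pos; lra).
  exists (mkposreal _ Hm). intros a s Ha Hs. simpl in *.
  assert (Rmin del T <= del) by apply Rmin_l. assert (Rmin del T <= T) by apply Rmin_r.
  rewrite Rmax_left with (x := 0) (y := 0) by lra.
  apply H'.
  - split. apply Rmax_l. apply Rabs_def2 in Hs. unfold Rmax; destruct Rle_dec; lra.
  - lra.
  - rewrite Rminus_0_r in *. apply Rabs_def2 in Hs. unfold Rmax; destruct Rle_dec.
    rewrite Rabs_right; lra. rewrite ?Rminus_diag, Rabs_R0; lra.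
Qed.

Lemma rc_int (F : R -> R -> R) T : 0 < T ->
  (forall u, 0 <= u <= 1 -> continuity_2d_pt (fun a s => F a (Rmax 0 s)) u 0) ->
  (forall s, 0 <= s < T -> forall u, continuity_pt (fun v => F v s) u) ->
  rc0 (fun s => RInt (fun v => F v s) 0 1).
Proof.
  intros HT Hc Hu eps Heps.
  assert (He2 : 0 < eps / 2) by lra.
  destruct (uniform_continuity_2d_1d (fun a s => F a (Rmax 0 s)) 0 1 0 Hc (mkposreal _ He2)) as [d Hd].
  assert (Hm : 0 < Rmin d T) by (apply Rmin_pos; [apply cond_pos|lra]).
  exists (Rmin d T). split; auto. intros s Hs.
  assert (Rmin d T <= d) by apply Rmin_l. assert (Rmin d T <= T) by apply Rmin_r.
  rewrite <- RInt_sub.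
  2,3: apply exR; [lra|]; intros; apply Hu; lra.
  eapply Rle_lt_trans. apply abs_RInt_le_const with (M := eps/2). lra.
  apply exR; [lra|]; intros; apply cp_minus; apply Hu; lra.
  intros v Hv. simpl in Hd.
  assert (E := Hd v 0 v s Hv ltac:(lra) Hv ltac:(lra) ltac:(rewrite Rminus_diag, Rabs_R0; apply cond_pos)).
  rewrite Rmax_right in E by lra. rewrite Rmax_left in E by lra. left; exact E.
  lra.
Qed.

Lemma cp_rmax z : continuity_pt (fun s => Rmax 0 s) z.
Proof.
  apply (cp_ext (fun s => (s + Rabs s) / 2)).
  intros s. unfold Rmax; destruct Rle_dec. rewrite Rabs_right; lra. rewrite Rabs_left; lra.
  apply cp_div. apply cp_plus. apply cp_id. apply Rcontinuity_abs. apply cp_const. lra.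
Qed.

Lemma rc_clamp h T : 0 < T -> rc0 h -> (forall s, 0 < s < T -> continuity_pt h s) ->
  forall s, 0 <= s < T -> continuity_pt (fun z => h (Rmax 0 z)) s.
Proof.
  intros HT Hr Hc s Hs. destruct (Req_dec s 0) as [->|Hs0].
  - intros eps Heps. destruct (Hr eps Heps) as [del [Hd H]].
    exists del. split; auto. intros z [_ Hz]. simpl in *. unfold R_dist in *.
    rewrite Rminus_0_r in Hz. rewrite (Rmax_left 0 0) by lra.
    unfold Rmax; destruct Rle_dec. apply H. apply Rabs_def2 in Hz; lra.
    rewrite Rminus_diag, Rabs_R0; lra.
  - apply (cp_comp h (fun z => Rmax 0 z)). apply cp_rmax. rewrite Rmax_right by lra. apply Hc; lra.
Qed.

Lemma mvt_c h dh T t : 0 < t < T ->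
  (forall s, 0 <= s < T -> continuity_pt (fun z => h (Rmax 0 z)) s) ->
  (forall s, 0 < s < T -> derivable_pt_lim h s (dh s)) ->
  exists c, 0 <= c <= t /\ h t - h 0 = dh c * t.
Proof.
  intros Ht Hc Hd.
  destruct (MVT_gen (fun z => h (Rmax 0 z)) 0 t dh) as [c [Hc1 Hc2]].
  - rewrite Rmin_left, Rmax_right by lra. intros z Hz.
    apply (is_derive_ext_loc h). apply (loc_int _ T z). lra. intros s Hs. rewrite Rmax_right; lra.
    apply is_derive_Reals, Hd; lra.
  - rewrite Rmin_left, Rmax_right by lra. intros z Hz. apply Hc; lra.
  - rewrite Rmin_left, Rmax_right in Hc1 by lra. exists c. split; auto.
    rewrite Rmax_right in Hc2 by lra. rewrite Rmax_left in Hc2 by lra. lra.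
Qed.

Lemma ivt_c h T t : 0 < t < T ->
  (forall s, 0 <= s < T -> continuity_pt (fun z => h (Rmax 0 z)) s) ->
  0 < h 0 -> (forall s, 0 <= s < T -> h s <> 0) -> 0 < h t.
Proof.
  intros Ht Hc H0 Hn. destruct (Rlt_or_le 0 (h t)) as [E|E]; auto. exfalso.
  assert (E' : h t < 0) by (destruct E; auto; exfalso; apply (Hn t); lra).
  destruct (Ranalysis5.IVT_interv (fun z => - h (Rmax 0 z)) 0 t) as [z [Hz Hz0]].
  - intros a Ha. apply cp_opp. apply Hc; lra.
  - lra.
  - rewrite Rmax_left by lra. lra.
  - rewrite Rmax_right by lra. lra.
  - apply (Hn (Rmax 0 z)). split. apply Rmax_l. rewrite Rmax_right by lra. lra. lra.
Qed.

Lemma rc0_lin h k c T : 0 < T -> (forall s, 0 <= s < T -> h s = c * k s) -> rc0 k -> rc0 h.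
Proof.
  intros HT E Hk eps Heps.
  assert (Hc : 0 < Rabs c + 1) by (assert (0 <= Rabs c) by apply Rabs_pos; lra).
  destruct (Hk (eps / (Rabs c + 1))) as [d [Hd H]]. apply Rdiv_lt_0_compat; lra.
  exists (Rmin d T). split. apply Rmin_pos; lra. intros s Hs.
  assert (Rmin d T <= d) by apply Rmin_l. assert (Rmin d T <= T) by apply Rmin_r.
  rewrite !E by lra. replace (c * k s - c * k 0) with (c * (k s - k 0)) by ring.
  rewrite Rabs_mult. assert (H2 := H s ltac:(lra)).
  assert (0 <= Rabs c) by apply Rabs_pos.
  apply Rle_lt_trans with (Rabs c * (eps / (Rabs c + 1))).
  apply Rmult_le_compat_l; lra.
  apply Rlt_le_trans with ((Rabs c + 1) * (eps / (Rabs c + 1))). assert (0 < eps / (Rabs c + 1)) by (apply Rdiv_lt_0_compat; lra). nra.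
  right; field; lra.
Qed.

Section Main.
Variables (n : nat) (p : flow) (x y : R -> R -> R) (T : R).
Hypothesis Hn : (1 <= n)%nat.
Hypothesis HT : 0 < T.
Hypothesis Sx : smooth_on x T.
Hypothesis Sy : smooth_on y T.
Hypothesis Hper : forall u t, 0 <= t < T -> x (u + 1) t = x u t /\ y (u + 1) t = y u t.
Hypothesis Hreg : forall u t, 0 <= t < T -> 0 < speed x y u t.
Hypothesis HK : forall t, 0 <= t < T -> Ktot x y t = 2 * PI * INR n.
Hypothesis Hflow : forall u t, 0 < t < T ->
     pt x u t = (ktil x y u t - gterm p x y t / Len x y t) * nux x y u t /\
     pt y u t = (ktil x y u t - gterm p x y t / Len x y t) * nuy x y u t.

Definition Vf (u t : R) := ktil x y u t - gterm p x y t / Len x y t.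

Lemma HV : forall t, 0 < t < T -> forall u, Dx (fun v => Vf v t) u.
Proof.
  intros t Ht u. assert (Ht' : 0 <= t < T) by lra. unfold Vf, ktil.
  apply (Dx_minus (fun v => kappa x y v t - Ktot x y t / Len x y t) (fun _ => gterm p x y t / Len x y t)).
  apply (Dx_minus (fun v => kappa x y v t) (fun _ => Ktot x y t / Len x y t)).
  apply (dkap x y T Sx Sy Hreg t Ht'). apply Dx_const. apply Dx_const.
Qed.

Lemma Hflow' : forall u t, 0 < t < T ->
  pt x u t = Vf u t * nux x y u t /\ pt y u t = Vf u t * nuy x y u t.
Proof. exact Hflow. Qed.

Section At.
Variable s : R.
Hypothesis Hs : 0 <= s < T.

Lemma Cs : forall u, continuity_pt (fun v => speed x y v s) u.
Proof. exact (csp x y T Sx Sy Hreg s Hs). Qed.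
Lemma Ck : forall u, continuity_pt (fun v => kappa x y v s) u.
Proof. exact (ckap x y T Sx Sy Hreg s Hs). Qed.
Lemma EX f : (forall u, continuity_pt f u) -> ex_RInt f 0 1.
Proof. intros; apply exR; auto; lra. Qed.

Lemma Lpos : 0 < Len x y s.
Proof.
  rewrite (Len_RInt x y T Sx Sy Hreg s Hs). apply RInt_gt_0. lra. intros; apply Hreg; auto.
  intros; apply cp2c, Cs.
Qed.

Lemma Kint : Ktot x y s = RInt (fun u => kappa x y u s * speed x y u s) 0 1.
Proof. unfold Ktot, int_s. apply integ_RInt. apply EX. intros; apply cp_mult; [apply Ck|apply Cs]. Qed.

Definition Qv := int_s x y (fun u t => ktil x y u t ^ 2) s.
Definition Jv := RInt (fun u => kappa x y u s ^ 2 * speed x y u s) 0 1.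

Lemma Q_eq : Qv = Jv - Ktot x y s ^ 2 / Len x y s.
Proof.
  assert (HL := Lpos). set (c := Ktot x y s / Len x y s).
  assert (C1 := Ck). assert (C2 := Cs).
  unfold Qv, int_s. rewrite integ_RInt.
  2: { apply EX. intros; unfold ktil; cont. }
  rewrite (RInt_extR _ (fun u => (kappa x y u s ^ 2 * speed x y u s + (-2 * c) * (kappa x y u s * speed x y u s)) + c ^ 2 * speed x y u s)).
  2: lra. 2: { intros u _. unfold ktil. fold c. ring. }
  rewrite RInt_add, RInt_add, RInt_scl, RInt_scl by (apply EX; intros; cont).
  rewrite <- Kint, <- (Len_RInt x y T Sx Sy Hreg s Hs). unfold Jv, c. field. lra.
Qed.

Lemma Q_nn : 0 <= Qv.
Proof.
  assert (C1 := Ck). assert (C2 := Cs).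
  unfold Qv, int_s. rewrite integ_RInt. apply RInt_nonneg. lra. apply EX; intros; unfold ktil; cont.
  intros u _. apply Rmult_le_pos. apply pow2_ge_0. left; apply Hreg; auto.
  apply EX; intros; unfold ktil; cont.
Qed.

Lemma I1 : @eq R (RInt (fun u => Vf u s * speed x y u s) 0 1) (- gterm p x y s).
Proof.
  assert (HL := Lpos). set (c := Ktot x y s / Len x y s + gterm p x y s / Len x y s).
  assert (C1 := Ck). assert (C2 := Cs).
  rewrite (RInt_extR _ (fun u => kappa x y u s * speed x y u s + (- c) * speed x y u s)).
  2: lra. 2: { intros u _. unfold Vf, ktil. fold c. unfold c. ring. }
  rewrite RInt_add, RInt_scl by (apply EX; intros; cont).
  rewrite <- Kint, <- (Len_RInt x y T Sx Sy Hreg s Hs). unfold c. field. lra.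
Qed.

Lemma I2 : @eq R (RInt (fun u => Vf u s * kappa x y u s * speed x y u s) 0 1)
   (Jv - (Ktot x y s / Len x y s + gterm p x y s / Len x y s) * Ktot x y s).
Proof.
  assert (HL := Lpos). set (c := Ktot x y s / Len x y s + gterm p x y s / Len x y s).
  assert (C1 := Ck). assert (C2 := Cs).
  rewrite (RInt_extR _ (fun u => kappa x y u s ^ 2 * speed x y u s + (- c) * (kappa x y u s * speed x y u s))).
  2: lra. 2: { intros u _. unfold Vf, ktil. fold c. unfold c. ring. }
  rewrite RInt_add, RInt_scl by (apply EX; intros; cont).
  rewrite <- Kint. unfold Jv. ring.
Qed.

Lemma isoT : 4 * PI * Area x y s <= Len x y s ^ 2.
Proof.
  assert (P0 := Hper 0 s Hs). rewrite Rplus_0_l in P0. destruct P0 as [Px Py].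
  assert (H := iso (fun v => x v s) (fun v => y v s) (fun v => pu x v s) (fun v => pu y v s)
     (gx0 x y T Sx Sy Hreg s Hs) (gy0 x y T Sx Sy Hreg s Hs) (cx1 x y T Sx Sy Hreg s Hs) (cy1 x y T Sx Sy Hreg s Hs)
     Px Py (fun u => Hreg u s Hs)).
  cbv beta in H. fold (speed x y) in H.
  rewrite (Area_RInt x y T Sx Sy Hreg s Hs), (Len_RInt x y T Sx Sy Hreg s Hs).
  assert (C0 := cx0 x y T Sx Sy Hreg s Hs). assert (C1 := cy0 x y T Sx Sy Hreg s Hs).
  assert (C2 := cx1 x y T Sx Sy Hreg s Hs). assert (C3 := cy1 x y T Sx Sy Hreg s Hs).
  rewrite (RInt_extR (fun v => y v s * pu x v s - x v s * pu y v s) (fun u => (-1) * (x u s * pu y u s - y u s * pu x u s))) by (lra || (intros; ring)).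
  rewrite RInt_scl by (apply EX; intros; cont).
  replace (4 * PI * (- (1 / 2) * (-1 * RInt (fun u : R => x u s * pu y u s - y u s * pu x u s) 0 1)))
    with (4 * PI * (1 / 2 * RInt (fun u : R => x u s * pu y u s - y u s * pu x u s) 0 1)) by field.
  exact H.
Qed.

End At.

Hypothesis HJ : p = JP -> forall t, 0 <= t < T -> Area x y t <> 0.
Hypothesis HA0 : 0 < Area x y 0.

Definition dA s := gterm p x y s.
Definition dL s := - Qv s + gterm p x y s * Ktot x y s / Len x y s.

Lemma dA_ok s : 0 < s < T -> derivable_pt_lim (Area x y) s (dA s).
Proof.
  intros Hs. eapply dpl_eq. apply (dArea x y T Vf Sx Sy Hreg Hflow' HV Hper s Hs).
  rewrite I1 by lra. unfold dA. ring.
Qed.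

Lemma dL_ok s : 0 < s < T -> derivable_pt_lim (Len x y) s (dL s).
Proof.
  intros Hs. assert (Hs' : 0 <= s < T) by lra. eapply dpl_eq. apply (dLen x y T Vf Sx Sy Hreg Hflow' HV s Hs).
  rewrite I2 by lra. unfold dL. rewrite Q_eq by lra. assert (H := Lpos s Hs'). field. lra.
Qed.

Lemma rcA : rc0 (Area x y).
Proof.
  apply (rc0_lin _ (fun s => RInt (fun v => y v s * pu x v s - x v s * pu y v s) 0 1) (- (1/2)) T HT).
  intros; apply (Area_RInt x y T Sx Sy Hreg); auto.
  apply (rc_int (fun v s => y v s * pu x v s - x v s * pu y v s) T HT).
  - intros u _. apply continuity_2d_pt_minus; apply continuity_2d_pt_mult.
    exact (clamp_c2 (dw (List.repeat true 0) y) T u HT (sm_rc y T Sy 0 u HT)).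
    exact (clamp_c2 (dw (List.repeat true 1) x) T u HT (sm_rc x T Sx 1 u HT)).
    exact (clamp_c2 (dw (List.repeat true 0) x) T u HT (sm_rc x T Sx 0 u HT)).
    exact (clamp_c2 (dw (List.repeat true 1) y) T u HT (sm_rc y T Sy 1 u HT)).
  - intros s0 Hs0 u.
    assert (C0 := cx0 x y T Sx Sy Hreg s0 Hs0). assert (C1 := cy0 x y T Sx Sy Hreg s0 Hs0).
    assert (C2 := cx1 x y T Sx Sy Hreg s0 Hs0). assert (C3 := cy1 x y T Sx Sy Hreg s0 Hs0). cont.
Qed.

Lemma rcL : rc0 (Len x y).
Proof.
  apply (rc0_lin _ (fun s => RInt (fun v => speed x y v s) 0 1) 1 T HT).
  intros; rewrite Rmult_1_l; apply (Len_RInt x y T Sx Sy Hreg); auto.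
  apply (rc_int (fun v s => speed x y v s) T HT).
  - intros u _. unfold speed. apply c2_sqrt. apply continuity_2d_pt_plus; apply c2_pow.
    exact (clamp_c2 (dw (List.repeat true 1) x) T u HT (sm_rc x T Sx 1 u HT)).
    exact (clamp_c2 (dw (List.repeat true 1) y) T u HT (sm_rc y T Sy 1 u HT)).
    apply Rplus_le_le_0_compat; apply pow2_ge_0.
  - intros s0 Hs0 u. apply (csp x y T Sx Sy Hreg s0 Hs0).
Qed.

Lemma CA s : 0 <= s < T -> continuity_pt (fun z => Area x y (Rmax 0 z)) s.
Proof. apply (rc_clamp _ T HT rcA). intros; eapply dpl_cont; apply dA_ok; auto. Qed.
Lemma CL s : 0 <= s < T -> continuity_pt (fun z => Len x y (Rmax 0 z)) s.
Proof. apply (rc_clamp _ T HT rcL). intros; eapply dpl_cont; apply dL_ok; auto. Qed.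

Lemma Kpos s : 0 <= s < T -> 0 < Ktot x y s.
Proof.
  intros Hs. rewrite HK by auto. assert (1 <= INR n) by (apply (le_INR 1); auto).
  assert (HP := PI_RGT_0). nra.
Qed.

Lemma Apos s : 0 <= s < T -> 0 < Area x y s.
Proof.
  intros Hs. destruct (Req_dec s 0) as [->|Hs0]; auto.
  assert (Hs' : 0 < s < T) by lra.
  assert (Hcases : p = AP \/ p = LP \/ p = JP) by (destruct p; auto).
  destruct Hcases as [Ep|[Ep|Ep]].
  - destruct (mvt_c (Area x y) dA T s Hs' CA dA_ok) as [c [Hc E]].
    unfold dA in E. rewrite Ep in E. simpl in E. lra.
  - destruct (mvt_c (Area x y) dA T s Hs' CA dA_ok) as [c [Hc E]].
    assert (Hc' : 0 <= c < T) by lra.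
    assert (0 <= dA c).
    { unfold dA. rewrite Ep. simpl. assert (H1 := Lpos c Hc'). assert (H2 := Kpos c Hc'). assert (H3 := Q_nn c Hc').
      unfold Qv in H3. apply Rmult_le_pos; [|auto]. apply Rmult_le_pos; [lra|]. left; apply Rinv_0_lt_compat; auto. }
    assert (0 <= dA c * s) by nra. lra.
  - apply (ivt_c (Area x y) T s Hs' CA HA0). apply HJ; auto.
Qed.

Lemma sgn s : 0 <= s < T -> 0 <= dA s * Len x y s - 2 * Area x y s * dL s.
Proof.
  intros Hs. assert (HL := Lpos s Hs). assert (HA := Apos s Hs). assert (HKp := Kpos s Hs).
  assert (HQ := Q_nn s Hs). unfold dA, dL.
  assert (Hcases : p = AP \/ p = LP \/ p = JP) by (destruct p; auto).
  destruct Hcases as [Ep|[Ep|Ep]]; rewrite Ep; cbn [gterm].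
  - nra.
  - unfold Qv in *. set (Q := int_s x y (fun u t => ktil x y u t ^ 2) s) in *.
    set (L := Len x y s) in *. set (K := Ktot x y s) in *. set (A := Area x y s) in *.
    replace (L * / K * Q * L - 2 * A * (- Q + L * / K * Q * K / L)) with (L * L * Q / K) by (field; lra).
    apply Rdiv_le_0_compat; [|lra]. apply Rmult_le_pos; [nra|auto].
  - unfold Qv in *. set (Q := int_s x y (fun u t => ktil x y u t ^ 2) s) in *.
    set (L := Len x y s) in *. set (K := Ktot x y s) in *. set (A := Area x y s) in *.
    replace ((L ^ 2 / (2 * A) - K) * L - 2 * A * (- Q + (L ^ 2 / (2 * A) - K) * K / L))
      with (((L^2 - 2 * A * K)^2 + 4 * A^2 * Q * L) / (2 * A * L)) by (field; lra).
    apply Rdiv_le_0_compat; [|nra]. assert (0 <= A^2 * Q * L). apply Rmult_le_pos; [|lra]. apply Rmult_le_pos; nra.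
    assert (0 <= (L ^ 2 - 2 * A * K) ^ 2) by apply pow2_ge_0. lra.
Qed.

Definition cI := 4 * INR n * PI.
Definition dI s := - cI * (dA s * Len x y s - 2 * Area x y s * dL s) / Len x y s ^ 3.

Lemma dI_ok s : 0 < s < T -> derivable_pt_lim (Im1 x y n) s (dI s).
Proof.
  intros Hs. assert (Hs' : 0 <= s < T) by lra. assert (HL := Lpos s Hs').
  unfold Im1. eapply dpl_eq.
  apply (dpl_minus (fun _ => 1) (fun t => 4 * INR n * PI * Area x y t / Len x y t ^ 2)). apply dpl_const.
  apply (dpl_div (fun t => 4 * INR n * PI * Area x y t) (fun t => Len x y t ^ 2)).
  apply dpl_scal, dA_ok; auto. apply dpl_sq, dL_ok; auto. apply pow_nonzero; lra.
  unfold dI, cI. field. lra.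
Qed.

Lemma dI_np s : 0 <= s < T -> dI s <= 0.
Proof.
  intros Hs. assert (HL := Lpos s Hs). assert (H := sgn s Hs). unfold dI, cI.
  assert (1 <= INR n) by (apply (le_INR 1); auto). assert (HP := PI_RGT_0).
  assert (0 < Len x y s ^ 3) by (apply pow_lt; auto).
  assert (0 <= 4 * INR n * PI * (dA s * Len x y s - 2 * Area x y s * dL s)).
  { apply Rmult_le_pos; auto. nra. }
  replace (- (4 * INR n * PI) * (dA s * Len x y s - 2 * Area x y s * dL s) / Len x y s ^ 3)
    with (- ((4 * INR n * PI * (dA s * Len x y s - 2 * Area x y s * dL s)) / Len x y s ^ 3)) by (field; lra).
  assert (0 <= (4 * INR n * PI * (dA s * Len x y s - 2 * Area x y s * dL s)) / Len x y s ^ 3)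
    by (apply Rdiv_le_0_compat; auto). lra.
Qed.

Lemma CI s : 0 <= s < T -> continuity_pt (fun z => Im1 x y n (Rmax 0 z)) s.
Proof.
  intros Hs. unfold Im1. assert (HL := Lpos s Hs).
  apply (cp_minus (fun _ => 1) (fun z => 4 * INR n * PI * Area x y (Rmax 0 z) / Len x y (Rmax 0 z) ^ 2)).
  apply cp_const. apply cp_div. apply cp_mult. apply cp_const. apply CA; auto.
  apply cp_pow, CL; auto. rewrite Rmax_right by lra. apply pow_nonzero; lra.
Qed.

Lemma Im1_mono t : 0 < t < T -> Im1 x y n t <= Im1 x y n 0.
Proof.
  intros Ht. destruct (mvt_c (Im1 x y n) dI T t Ht CI dI_ok) as [c [Hc E]].
  assert (dI c <= 0) by (apply dI_np; lra). assert (dI c * t <= 0) by nra. lra.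
Qed.

Lemma main_in t : 0 < t < T ->
    (p = AP ->
       deriv_sat (Area x y) t (fun d => d = 0) /\
       Area x y t = Area x y 0 /\
       deriv_sat (fun s => Len x y s ^ 2) t (fun d => d <= 0) /\
       deriv_sat (Im1 x y n) t (fun d => d <= 0)) /\
    (p = LP ->
       deriv_sat (Area x y) t (fun d => 0 <= d) /\
       Area x y 0 <= Area x y t /\
       deriv_sat (fun s => Len x y s ^ 2) t (fun d => d = 0) /\
       deriv_sat (Im1 x y n) t (fun d => d <= 0)) /\
    (p = JP ->
       0 < Area x y t /\
       deriv_sat (Im1 x y n) t (fun d => d <= 0)) /\
    (1 - INR n <= Im1 x y n t <= Im1 x y n 0 /\
     4 * PI <= Len x y t ^ 2 / Area x y t <= Len x y 0 ^ 2 / Area x y 0).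
Proof.
  intros Ht. assert (Ht' : 0 <= t < T) by lra. assert (H0' : 0 <= 0 < T) by lra.
  assert (HL := Lpos t Ht'). assert (HA := Apos t Ht'). assert (HL0 := Lpos 0 H0').
  assert (Hiso := isoT t Ht'). assert (Hmono := Im1_mono t Ht).
  assert (HQ := Q_nn t Ht'). assert (HKp := Kpos t Ht').
  assert (HI : deriv_sat (Im1 x y n) t (fun d => d <= 0)).
  { exists (dI t). split. apply dI_ok; auto. apply dI_np; auto. }
  assert (Hn1 : 1 <= INR n) by (apply (le_INR 1); auto). assert (HP := PI_RGT_0).
  split; [|split; [|split]].
  - intros Ep. split; [|split; [|split]]; auto.
    + exists (dA t). split. apply dA_ok; auto. unfold dA; rewrite Ep; reflexivity.
    + destruct (mvt_c (Area x y) dA T t Ht CA dA_ok) as [c [Hc E]].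
      unfold dA in E. rewrite Ep in E. simpl in E. lra.
    + exists (2 * Len x y t * dL t). split. apply dpl_sq, dL_ok; auto.
      unfold dL. rewrite Ep. cbn [gterm]. nra.
  - intros Ep. split; [|split; [|split]]; auto.
    + exists (dA t). split. apply dA_ok; auto. unfold dA; rewrite Ep; cbn [gterm].
      unfold Qv in HQ. apply Rmult_le_pos; [|auto]. apply Rmult_le_pos; [lra|]. left; apply Rinv_0_lt_compat; auto.
    + destruct (mvt_c (Area x y) dA T t Ht CA dA_ok) as [c [Hc E]].
      assert (Hc' : 0 <= c < T) by lra.
      assert (0 <= dA c).
      { unfold dA. rewrite Ep. cbn [gterm]. assert (H1 := Lpos c Hc'). assert (H2 := Kpos c Hc'). assert (H3 := Q_nn c Hc').
        unfold Qv in H3. apply Rmult_le_pos; [|auto]. apply Rmult_le_pos; [lra|]. left; apply Rinv_0_lt_compat; auto. }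
      assert (0 <= dA c * t) by nra. lra.
    + exists (2 * Len x y t * dL t). split. apply dpl_sq, dL_ok; auto.
      unfold dL. rewrite Ep. cbn [gterm]. unfold Qv. field. lra.
  - intros Ep. auto.
  - assert (HA0' := HA0).
    unfold Im1 in *.
    set (L := Len x y t) in *. set (A := Area x y t) in *. set (L0 := Len x y 0) in *. set (A0 := Area x y 0) in *.
    assert (HL2 : 0 < L ^ 2) by (apply pow_lt; auto). assert (HL02 : 0 < L0 ^ 2) by (apply pow_lt; auto).
    assert (R1 : 4 * PI * A / L ^ 2 <= 1).
    { apply (Rmult_le_reg_r (L^2)); auto. replace (4 * PI * A / L ^ 2 * L ^ 2) with (4 * PI * A) by (field; lra). lra. }
    assert (R2 : 4 * INR n * PI * A0 / L0 ^ 2 <= 4 * INR n * PI * A / L ^ 2) by lra.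
    assert (R3 : A0 / L0 ^ 2 <= A / L ^ 2).
    { apply (Rmult_le_reg_l (4 * INR n * PI)). nra.
      replace (4 * INR n * PI * (A0 / L0 ^ 2)) with (4 * INR n * PI * A0 / L0 ^ 2) by (field; lra).
      replace (4 * INR n * PI * (A / L ^ 2)) with (4 * INR n * PI * A / L ^ 2) by (field; lra). auto. }
    split; split; auto.
    + replace (4 * INR n * PI * A / L ^ 2) with (INR n * (4 * PI * A / L ^ 2)) by (field; lra).
      assert (INR n * (4 * PI * A / L ^ 2) <= INR n * 1) by (apply Rmult_le_compat_l; lra). lra.
    + apply (Rmult_le_reg_r A); auto. replace (L ^ 2 / A * A) with (L ^ 2) by (field; lra). lra.
    + assert (0 < A0 / L0 ^ 2) by (apply Rdiv_lt_0_compat; auto).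
      replace (L ^ 2 / A) with (/ (A / L ^ 2)) by (field; lra).
      replace (L0 ^ 2 / A0) with (/ (A0 / L0 ^ 2)) by (field; lra).
      apply Rinv_le_contravar; auto.
Qed.

End Main.

Theorem mainTheorem10 (n : nat) (p : flow) (x y : R -> R -> R) (T : R) :
  (1 <= n)%nat -> 0 < T ->
  classical_sol n p x y T ->
  0 < Area x y 0 ->
  forall t, 0 < t < T ->
    (p = AP ->
       deriv_sat (Area x y) t (fun d => d = 0) /\
       Area x y t = Area x y 0 /\
       deriv_sat (fun s => Len x y s ^ 2) t (fun d => d <= 0) /\
       deriv_sat (Im1 x y n) t (fun d => d <= 0)) /\
    (p = LP ->
       deriv_sat (Area x y) t (fun d => 0 <= d) /\
       Area x y 0 <= Area x y t /\
       deriv_sat (fun s => Len x y s ^ 2) t (fun d => d = 0) /\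
       deriv_sat (Im1 x y n) t (fun d => d <= 0)) /\
    (p = JP ->
       0 < Area x y t /\
       deriv_sat (Im1 x y n) t (fun d => d <= 0)) /\
    (1 - INR n <= Im1 x y n t <= Im1 x y n 0 /\
     4 * PI <= Len x y t ^ 2 / Area x y t <= Len x y 0 ^ 2 / Area x y 0).
Proof.
  intros Hn HT Hsol HA0 t Ht.
  destruct Hsol as [Sx [Sy [Hper [Hreg [HK [HJ Hflow]]]]]].
  apply (main_in n p x y T); auto.
Qed.
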